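(* Let $h,h'$ be HPS with $h\Rrightarrow h'$, let $P$ be an H-Qbricks program that uses only registers occurring in $h'$, and let $h''$ be an HPS such that $h\otimes h''$ is defined. Then (1) $h\otimes h''\Rrightarrow h'\otimes h''$ (and hence also $h''\otimes h\Rrightarrow h''\otimes h'$), and (2) $[\![P]\!](h)\Rrightarrow[\![P]\!](h')$.
   Context: HPS: $h=\langle P,o,s\rangle_{su}$ with $su$ a finite set of Boolean path variables; $o_{Qu}$ a finite map from quantum addresses to Boolean polynomials in input variables $x_i$ and path variables; $o_{Cl}$ a stack of maps from classical addresses to such polynomials (top = current); $P$ a dyadic-coefficient polynomial; $s$ a real scalar expression. $\xi(h)(\eta)=\sum_{\vec y\in\{0,1\}^{su},o_{Cl}(\vec y)=\eta}s(\vec y)e^{2\pi iP(\vec y)}|o_{Qu}(\vec y)\rangle$ for histories $\eta$, and $|h|=\sqrt{\sum_\eta\|\xi(h)(\eta)\|^2}$. Tensor: $h_1\otimes h_2=\langle P_1+P_2,o_1\cup o_2,s_1s_2\rangle_{su_1\cup su_2}$ when supports are disjoint and the quantum addresses and classical (address, time) cells are disjoint (it is commutative, registers being indexed by addresses). $h_1\boxplus h_2$: support $su_1\cup su_2\cup\{y_f\}$, $y_f$ fresh, equal to $h_1$ (scalar times $\prod_{y\in su_2\setminus su_1}y$) on $y_f=0$ and $h_2$ (scalar times $\prod_{y\in su_1\setminus su_2}y$) on $y_f=1$. Here $h\Rrightarrow h'$ means there is an HPS $h_a$ with $|h_a|=1$, containing no input variables, such that $h=h'\otimes h_a$. Programs: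 Skip; Init $q$; Apply $G(q)$, $G\in\{H,X\}\cup\{Z_k\}$; Measure$(q,c)$; $c_1:=f(c_2)$; $p;p'$; For with constant bounds; If $b$ then $p$ else $p'$ ($b$ classical, or quantum with unitary branches disjoint from $b$'s registers). Semantics ($\lceil q\rceil$ = current contents): Skip identity; Init sets $q$ to $0$; $H$: fresh $y$ in support, scalar times $1/\sqrt2$, phase plus $y\lceil q\rceil/2$, $q:=y$; $X$: $q:=1\oplus\lceil q\rceil$; $Z_k$: phase plus $\lceil q\rceil/2^k$; Measure$(q,c)$ pushes onto $o_{Cl}$ a copy of the top entry with $c$ holding $\lceil q\rceil$; $c_1:=f(c_2)$ pushes a copy with $c_1$ holding $f(\lceil c_2\rceil)$; sequencing is composition; For unfolds; $[\![\mathrm{If}\,b\,\mathrm{then}\,p\,\mathrm{else}\,p']\!]h=[\![p]\!](b\cdot h)\boxplus[\![p']\!]((1-b)\cdot h)$, $b\cdot h$ multiplying the scalar by $b$. *)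

(* Defs.v *)
From Stdlib Require Import Bool Reals Lra Lia ZArith List Arith ClassicalEpsilon.
Import ListNotations.
Open Scope R_scope.

Set Implicit Arguments.

(** A valuation of the variables: input variables x_i and path variables y_j
    (both indexed by nat). *)
Record env := Env { ein : nat -> bool ; epath : nat -> bool }.

(** Boolean polynomials (over GF(2)) are represented by the Boolean function of
    the variables they denote; real-valued expressions (phase polynomial,
    scalar) likewise.  The well-formedness predicate [wf_hps] below restricts
    them to functions depending on finitely many input variables and only on
    the path variables of the support, which is exactly the class of
    Boolean polynomials (resp. dyadic polynomials for the phase). *)
Definition bpoly := env -> bool.
Definition rpoly := env -> R.

Definition amap := nat -> option bpoly.
Definition emptymap : amap := fun _ => None.
Definition mupd (m : amap) (a : nat) (p : bpoly) : amap :=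
  fun a' => if Nat.eqb a' a then Some p else m a'.
Definition mget (m : amap) (a : nat) : bpoly :=
  match m a with Some p => p | None => fun _ => false end.

(** An HPS  <P, o, s>_su.
    - [hsu] : the support su (list of path-variable indices, duplicate free)
    - [hqu] : o_Qu, finite map quantum address -> Boolean polynomial
    - [hcl] : o_Cl, stack of maps classical address -> Boolean polynomial,
              indexed by time: element 0 is the bottom (oldest), the LAST
              element is the top (current memory)
    - [hP]  : phase polynomial P
    - [hs]  : scalar s *)
Record HPS := mkHPS {
  hsu : list nat ;
  hqu : amap ;
  hcl : list amap ;
  hP  : rpoly ;
  hs  : rpoly }.

Definition htop (h : HPS) : amap := last (hcl h) emptymap.

Definition curq (h : HPS) (q : nat) : bpoly := mget (hqu h) q.
Definition curc (h : HPS) (c : nat) : bpoly := mget (htop h) c.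

Definition dep_only {T : Type} (X Y : nat -> Prop) (f : env -> T) : Prop :=
  forall e1 e2,
    (forall i, X i -> ein e1 i = ein e2 i) ->
    (forall j, Y j -> epath e1 j = epath e2 j) ->
    f e1 = f e2.

Definition finite_dom (m : amap) : Prop :=
  exists l : list nat, forall a, m a <> None -> In a l.

Definition dyadic (r : R) : Prop := exists (z : Z) (k : nat), r = IZR z / 2 ^ k.

(** An HPS is well formed: duplicate-free support, finite maps, every
    expression uses finitely many input variables and only path variables of
    the support, and the phase polynomial has dyadic coefficients (for a
    function of finitely many Boolean variables, this is equivalent to taking
    dyadic values). *)
Definition wf_hps (h : HPS) : Prop :=
  NoDup (hsu h) /\ finite_dom (hqu h) /\ Forall finite_dom (hcl h) /\
  exists I : list nat,
    let X := fun i => In i I in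
    let Y := fun j => In j (hsu h) in
    (forall q p, hqu h q = Some p -> dep_only X Y p) /\
    (forall m, In m (hcl h) -> forall c p, m c = Some p -> dep_only X Y p) /\
    dep_only X Y (hP h) /\ dep_only X Y (hs h) /\
    (forall e, dyadic (hP h e)).

Definition no_input (h : HPS) : Prop :=
  let X := fun _ : nat => False in
  let Y := fun j => In j (hsu h) in
  (forall q p, hqu h q = Some p -> dep_only X Y p) /\
  (forall m, In m (hcl h) -> forall c p, m c = Some p -> dep_only X Y p) /\
  dep_only X Y (hP h) /\ dep_only X Y (hs h).

Definition fupd (y : nat -> bool) (j : nat) (b : bool) : nat -> bool :=
  fun j' => if Nat.eqb j' j then b else y j'.

(** all assignments \vec y ∈ {0,1}^su (variables outside su set to false) *)
Fixpoint assigns (l : list nat) : list (nat -> bool) :=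
  match l with
  | [] => [fun _ => false]
  | j :: l' => flat_map (fun y => [fupd y j false; fupd y j true]) (assigns l')
  end.

Definition ceqb {T : Type} (a b : T) : bool :=
  if excluded_middle_informative (a = b) then true else false.
Fixpoint cdedup {T : Type} (l : list T) : list T :=
  match l with
  | [] => []
  | a :: l' => if existsb (ceqb a) l' then cdedup l' else a :: cdedup l'
  end.

Definition rsum {T : Type} (l : list T) (f : T -> R) : R :=
  fold_right Rplus 0 (map f l).

Definition eval_map (m : amap) (e : env) : nat -> option bool :=
  fun a => match m a with Some p => Some (p e) | None => None end.

Definition hist_at (h : HPS) (e : env) : list (nat -> option bool) :=
  map (fun m => eval_map m e) (hcl h).
Definition ket_at (h : HPS) (e : env) : nat -> option bool := eval_map (hqu h) e.

(** |h|^2 = Σ_η ‖ξ(h)(η)‖^2 = Σ_η Σ_k |Σ_{y : o_Cl(y)=η, o_Qu(y)=k} s(y) e^{2πiP(y)}|^2,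
    at input valuation [x] (η and k range over the realised histories / kets;
    the other terms are zero). *)
Definition hps_norm2 (h : HPS) (x : nat -> bool) : R :=
  let A := assigns (hsu h) in
  let E := fun y => Env x y in
  rsum (cdedup (map (fun y => hist_at h (E y)) A)) (fun eta =>
  rsum (cdedup (map (fun y => ket_at h (E y)) A)) (fun k =>
    let sel := fun y => ceqb (hist_at h (E y)) eta && ceqb (ket_at h (E y)) k in
    let re := rsum A (fun y => if sel y then hs h (E y) * cos (2 * PI * hP h (E y)) else 0) in
    let im := rsum A (fun y => if sel y then hs h (E y) * sin (2 * PI * hP h (E y)) else 0) in
    re * re + im * im)).

Definition hps_norm (h : HPS) (x : nat -> bool) : R := sqrt (hps_norm2 h x).

Definition munion (m1 m2 : amap) : amap :=
  fun a => match m1 a with Some p => Some p | None => m2 a end.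

Definition tensor (h1 h2 : HPS) : HPS :=
  mkHPS (hsu h1 ++ hsu h2)
        (munion (hqu h1) (hqu h2))
        (map (fun mm => munion (fst mm) (snd mm)) (combine (hcl h1) (hcl h2)))
        (fun e => hP h1 e + hP h2 e)
        (fun e => hs h1 e * hs h2 e).

(** h1 ⊗ h2 is defined: disjoint supports, disjoint quantum addresses,
    disjoint classical (address, time) cells; the two stacks are indexed by
    the same (global) time, i.e. have the same length. *)
Definition tensor_ok (h1 h2 : HPS) : Prop :=
  (forall j, In j (hsu h1) -> ~ In j (hsu h2)) /\
  (forall q, hqu h1 q <> None -> hqu h2 q = None) /\
  length (hcl h1) = length (hcl h2) /\
  (forall t c, nth t (hcl h1) emptymap c <> None -> nth t (hcl h2) emptymap c = None).

Definition rename_env (rho : nat -> nat) (e : env) : env :=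
  Env (ein e) (fun j => epath e (rho j)).

Definition rename_map (rho : nat -> nat) (m : amap) : amap :=
  fun a => match m a with Some p => Some (fun e => p (rename_env rho e)) | None => None end.

(** path variable y_j is renamed into y_(rho j) *)
Definition rename (rho : nat -> nat) (h : HPS) : HPS :=
  mkHPS (map rho (hsu h)) (rename_map rho (hqu h)) (map (rename_map rho) (hcl h))
        (fun e => hP h (rename_env rho e)) (fun e => hs h (rename_env rho e)).

Definition map_eq (m1 m2 : amap) : Prop :=
  forall a, match m1 a, m2 a with
            | Some p1, Some p2 => forall e, p1 e = p2 e
            | None, None => True
            | _, _ => False
            end.

Definition hps_eq (h1 h2 : HPS) : Prop :=
  (forall j, In j (hsu h1) <-> In j (hsu h2)) /\
  map_eq (hqu h1) (hqu h2) /\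
  length (hcl h1) = length (hcl h2) /\
  (forall t, map_eq (nth t (hcl h1) emptymap) (nth t (hcl h2) emptymap)) /\
  (forall e, hP h1 e = hP h2 e) /\ (forall e, hs h1 e = hs h2 e).

Definition alpha_eq (h1 h2 : HPS) : Prop :=
  exists rho rho' : nat -> nat,
    (forall j, rho' (rho j) = j) /\ (forall j, rho (rho' j) = j) /\
    hps_eq h1 (rename rho h2).

Definition hps_impl (h h' : HPS) : Prop :=
  exists ha : HPS,
    wf_hps ha /\ no_input ha /\ (forall x, hps_norm ha x = 1) /\
    tensor_ok h' ha /\ alpha_eq h (tensor h' ha).

Inductive bexp : Type :=
| BConst (b : bool)
| BCReg (c : nat)
| BQReg (q : nat)
| BNot (b : bexp)
| BAnd (b1 b2 : bexp)
| BXor (b1 b2 : bexp).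

Inductive gate : Type := GH | GX | GZ (k : nat).

Inductive prog : Type :=
| Skip
| Init (q : nat)
| Apply (g : gate) (q : nat)
| Measure (q c : nat)
| Assign (c1 : nat) (f : bool -> bool) (c2 : nat)
| Seq (p1 p2 : prog)
| For (lo hi : nat) (body : nat -> prog)               (* for i = lo to hi-1 do body i *)
| If (b : bexp) (p1 p2 : prog).

Fixpoint bexp_classical (b : bexp) : Prop :=
  match b with
  | BConst _ | BCReg _ => True
  | BQReg _ => False
  | BNot b1 => bexp_classical b1
  | BAnd b1 b2 | BXor b1 b2 => bexp_classical b1 /\ bexp_classical b2
  end.

Fixpoint bexp_quantum (b : bexp) : Prop :=
  match b with
  | BConst _ | BQReg _ => True
  | BCReg _ => False
  | BNot b1 => bexp_quantum b1
  | BAnd b1 b2 | BXor b1 b2 => bexp_quantum b1 /\ bexp_quantum b2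
  end.

Fixpoint bexp_uses_q (b : bexp) (q : nat) : Prop :=
  match b with
  | BConst _ | BCReg _ => False
  | BQReg q' => q' = q
  | BNot b1 => bexp_uses_q b1 q
  | BAnd b1 b2 | BXor b1 b2 => bexp_uses_q b1 q \/ bexp_uses_q b2 q
  end.

Fixpoint prog_uses_q (p : prog) (q : nat) : Prop :=
  match p with
  | Skip | Assign _ _ _ => False
  | Init q' | Apply _ q' | Measure q' _ => q' = q
  | Seq p1 p2 => prog_uses_q p1 q \/ prog_uses_q p2 q
  | For lo hi body => exists i, lo <= i < hi /\ prog_uses_q (body i) q
  | If b p1 p2 => bexp_uses_q b q \/ prog_uses_q p1 q \/ prog_uses_q p2 q
  end%nat.

Fixpoint unitary (p : prog) : Prop :=
  match p with
  | Skip | Apply _ _ => True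
  | Init _ | Measure _ _ | Assign _ _ _ => False
  | Seq p1 p2 => unitary p1 /\ unitary p2
  | For lo hi body => forall i, lo <= i < hi -> unitary (body i)
  | If b p1 p2 => bexp_quantum b /\ unitary p1 /\ unitary p2 /\
                  (forall q, bexp_uses_q b q -> ~ prog_uses_q p1 q /\ ~ prog_uses_q p2 q)
  end%nat.

Fixpoint valid_prog (p : prog) : Prop :=
  match p with
  | Skip | Init _ | Apply _ _ | Measure _ _ | Assign _ _ _ => True
  | Seq p1 p2 => valid_prog p1 /\ valid_prog p2
  | For lo hi body => forall i, lo <= i < hi -> valid_prog (body i)
  | If b p1 p2 =>
      (bexp_classical b /\ valid_prog p1 /\ valid_prog p2) \/
      (bexp_quantum b /\ unitary p1 /\ unitary p2 /\
       (forall q, bexp_uses_q b q -> ~ prog_uses_q p1 q /\ ~ prog_uses_q p2 q))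
  end%nat.

Fixpoint bexp_in (h : HPS) (b : bexp) : Prop :=
  match b with
  | BConst _ => True
  | BCReg c => htop h c <> None
  | BQReg q => hqu h q <> None
  | BNot b1 => bexp_in h b1
  | BAnd b1 b2 | BXor b1 b2 => bexp_in h b1 /\ bexp_in h b2
  end.

Fixpoint uses_only (h : HPS) (p : prog) : Prop :=
  match p with
  | Skip => True
  | Init q | Apply _ q => hqu h q <> None
  | Measure q c => hqu h q <> None /\ htop h c <> None
  | Assign c1 _ c2 => htop h c1 <> None /\ htop h c2 <> None
  | Seq p1 p2 => uses_only h p1 /\ uses_only h p2
  | For lo hi body => forall i, lo <= i < hi -> uses_only h (body i)
  | If b p1 p2 => bexp_in h b /\ uses_only h p1 /\ uses_only h p2
  end%nat.

Definition b2R (b : bool) : R := if b then 1 else 0.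

Definition fresh (l : list nat) : nat := S (fold_right Nat.max 0%nat l).

Definition set_qu (h : HPS) (m : amap) : HPS := mkHPS (hsu h) m (hcl h) (hP h) (hs h).
Definition push_cl (h : HPS) (m : amap) : HPS :=
  mkHPS (hsu h) (hqu h) (hcl h ++ [m]) (hP h) (hs h).

Definition sem_gate (g : gate) (q : nat) (h : HPS) : HPS :=
  match g with
  | GH =>
      let y := fresh (hsu h) in
      mkHPS (hsu h ++ [y])
            (mupd (hqu h) q (fun e => epath e y))
            (hcl h)
            (fun e => hP h e + b2R (epath e y && curq h q e) / 2)
            (fun e => hs h e * / sqrt 2)
  | GX => set_qu h (mupd (hqu h) q (fun e => negb (curq h q e)))
  | GZ k => mkHPS (hsu h) (hqu h) (hcl h)
                  (fun e => hP h e + b2R (curq h q e) / 2 ^ k) (hs h)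
  end.

Fixpoint eval_bexp (h : HPS) (b : bexp) : bpoly :=
  match b with
  | BConst b0 => fun _ => b0
  | BCReg c => curc h c
  | BQReg q => curq h q
  | BNot b1 => fun e => negb (eval_bexp h b1 e)
  | BAnd b1 b2 => fun e => eval_bexp h b1 e && eval_bexp h b2 e
  | BXor b1 b2 => fun e => xorb (eval_bexp h b1 e) (eval_bexp h b2 e)
  end.

Definition scale (g : bpoly) (h : HPS) : HPS :=
  mkHPS (hsu h) (hqu h) (hcl h) (hP h) (fun e => hs h e * b2R (g e)).

(** padding of a classical stack to length n (memory persists) *)
Definition pad (l : list amap) (n : nat) : list amap :=
  l ++ repeat (last l emptymap) (n - length l).

Definition mselect (yf : nat) (m1 m2 : amap) : amap :=
  fun a => match m1 a, m2 a with
           | None, None => None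
           | _, _ => Some (fun e => if epath e yf then mget m2 a e else mget m1 a e)
           end.

Definition lminus (l1 l2 : list nat) : list nat :=
  filter (fun j => negb (existsb (Nat.eqb j) l2)) l1.

Definition rprod (l : list nat) (e : env) : R := fold_right Rmult 1 (map (fun y => b2R (epath e y)) l).

Definition hplus (h1 h2 : HPS) : HPS :=
  let yf := fresh (hsu h1 ++ hsu h2) in
  let n := Nat.max (length (hcl h1)) (length (hcl h2)) in
  mkHPS (hsu h1 ++ lminus (hsu h2) (hsu h1) ++ [yf])
        (mselect yf (hqu h1) (hqu h2))
        (map (fun mm => mselect yf (fst mm) (snd mm))
             (combine (pad (hcl h1) n) (pad (hcl h2) n)))
        (fun e => if epath e yf then hP h2 e else hP h1 e)
        (fun e => if epath e yf
                  then hs h2 e * rprod (lminus (hsu h1) (hsu h2)) e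
                  else hs h1 e * rprod (lminus (hsu h2) (hsu h1)) e).

Fixpoint sem (p : prog) (h : HPS) : HPS :=
  match p with
  | Skip => h
  | Init q => set_qu h (mupd (hqu h) q (fun _ => false))
  | Apply g q => sem_gate g q h
  | Measure q c => push_cl h (mupd (htop h) c (curq h q))
  | Assign c1 f c2 => push_cl h (mupd (htop h) c1 (fun e => f (curc h c2 e)))
  | Seq p1 p2 => sem p2 (sem p1 h)
  | For lo hi body =>
      (fix loop (n i : nat) (h0 : HPS) {struct n} : HPS :=
         match n with
         | O => h0
         | S n' => loop n' (S i) (sem (body i) h0)
         end) (hi - lo)%nat lo h
  | If b p1 p2 =>
      let g := eval_bexp h b in
      hplus (sem p1 (scale g h)) (sem p2 (scale (fun e => negb (g e)) h))
  end.

(* Main.v *)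
Require Import Defs.
From Stdlib Require Import Reals List.
From Stdlib Require Import FinFun Bool Lra Lia ZArith Arith ClassicalEpsilon FunctionalExtensionality.
Import ListNotations.
Open Scope R_scope.

Definition maxl (l : list nat) : nat := fold_right Nat.max 0%nat l.

Lemma fresh_maxl l : fresh l = S (maxl l).
Proof. reflexivity. Qed.

Lemma in_le_maxl x l : In x l -> (x <= maxl l)%nat.
Proof. induction l; simpl; intros H; [contradiction|]. destruct H; subst; lia || (specialize (IHl H); lia). Qed.

Lemma maxl_le l b : (forall x, In x l -> x <= b)%nat -> (maxl l <= b)%nat.
Proof. induction l; simpl; intros H; [lia|]. assert (a <= b)%nat by auto. assert (maxl l <= b)%nat by auto. lia. Qed.

Lemma maxl_incl l0 l : (forall x, In x l0 -> In x l) -> (maxl l0 <= maxl l)%nat.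
Proof. intros H. apply maxl_le. intros x Hx. apply in_le_maxl; auto. Qed.

Lemma maxl_char l l0 k :
  (forall j, In j l <-> In j l0 \/ (maxl l0 < j <= maxl l0 + k)%nat) ->
  maxl l = (maxl l0 + k)%nat.
Proof.
  intros H. apply Nat.le_antisymm.
  - apply maxl_le. intros x Hx. apply H in Hx. destruct Hx as [Hx|Hx]; [apply in_le_maxl in Hx|]; lia.
  - destruct k.
    + rewrite Nat.add_0_r. apply maxl_incl. intros x Hx. apply H; auto.
    + apply in_le_maxl. apply H. right. lia.
Qed.

Lemma maxl_app l1 l2 : maxl (l1 ++ l2) = Nat.max (maxl l1) (maxl l2).
Proof. induction l1; simpl; [lia|]. unfold maxl in *. simpl. rewrite IHl1. lia. Qed.

Definition bij (r r' : nat -> nat) : Prop := (forall j, r' (r j) = j) /\ (forall j, r (r' j) = j).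

Definition swap (a b x : nat) : nat := if Nat.eqb x a then b else if Nat.eqb x b then a else x.

Lemma swap_invol a b x : swap a b (swap a b x) = x.
Proof.
  unfold swap. destruct (Nat.eqb_spec x a); destruct (Nat.eqb_spec x b); subst;
  repeat (first [rewrite Nat.eqb_refl | match goal with |- context [Nat.eqb ?u ?v] => destruct (Nat.eqb_spec u v) end]); subst; auto; try lia.
Qed.

Lemma swap_other a b x : x <> a -> x <> b -> swap a b x = x.
Proof. intros. unfold swap. destruct (Nat.eqb_spec x a); [lia|]. destruct (Nat.eqb_spec x b); [lia|]. auto. Qed.

Lemma swap_a a b : swap a b a = b.
Proof. unfold swap. rewrite Nat.eqb_refl. auto. Qed.

Lemma bij_inj r r' a b : bij r r' -> r a = r b -> a = b.
Proof. intros [H1 _] E. rewrite <- (H1 a), <- (H1 b), E. auto. Qed.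

Lemma ext_bij (g : nat -> nat) : forall l S r r', bij r r' ->
  (forall j, In j S -> r j = g j) ->
  (forall a b, In a (S ++ l) -> In b (S ++ l) -> g a = g b -> a = b) ->
  exists r2 r2', bij r2 r2' /\ forall j, In j (S ++ l) -> r2 j = g j.
Proof.
  induction l as [|v l IH]; intros S r r' Hb HS Hinj.
  - exists r, r'. split; auto. rewrite app_nil_r. auto.
  - destruct (in_dec Nat.eq_dec v S) as [Hv|Hv].
    + destruct (IH (v :: S) r r' Hb) as (r2 & r2' & Hb2 & H2).
      * intros j [<-|Hj]; auto.
      * intros a b Ha Hb' E. apply Hinj; auto;
        [revert Ha|revert Hb']; simpl; rewrite !in_app_iff; simpl; intuition.
      * exists r2, r2'. split; auto. intros j Hj. apply H2. revert Hj. simpl; rewrite !in_app_iff; simpl; intuition.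
    + set (r1 := fun x => swap (r v) (g v) (r x)).
      set (r1' := fun x => r' (swap (r v) (g v) x)).
      assert (Hb1 : bij r1 r1').
      { destruct Hb as [B1 B2]. split; intros j; unfold r1, r1'; rewrite ?swap_invol, ?B1, ?B2, ?swap_invol; auto. }
      destruct (IH (v :: S) r1 r1' Hb1) as (r2 & r2' & Hb2 & H2).
      * intros j [<-|Hj].
        -- unfold r1. apply swap_a.
        -- unfold r1. rewrite (HS j Hj). apply swap_other.
           ++ rewrite <- (HS j Hj). intros E. apply (bij_inj _ _ _ _ Hb) in E. subst. contradiction.
           ++ intros E. apply Hinj in E; [subst; contradiction| |]; rewrite in_app_iff; simpl; auto.
      * intros a b Ha Hb' E. apply Hinj; auto;
        [revert Ha|revert Hb']; simpl; rewrite !in_app_iff; simpl; intuition.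
      * exists r2, r2'. split; auto. intros j Hj. apply H2. revert Hj. simpl; rewrite !in_app_iff; simpl; intuition.
Qed.

Definition heq (h1 h2 : HPS) : Prop :=
  (forall j, In j (hsu h1) <-> In j (hsu h2)) /\ hqu h1 = hqu h2 /\ hcl h1 = hcl h2 /\
  hP h1 = hP h2 /\ hs h1 = hs h2.

Lemma map_eq_eq m1 m2 : map_eq m1 m2 -> m1 = m2.
Proof.
  intros H. extensionality a. specialize (H a).
  destruct (m1 a), (m2 a); try contradiction; auto.
  f_equal. extensionality e. auto.
Qed.

Lemma map_eq_refl m : map_eq m m.
Proof. intros a. destruct (m a); auto. Qed.

Lemma hps_eq_heq h1 h2 : hps_eq h1 h2 -> heq h1 h2.
Proof.
  intros (H1 & H2 & H3 & H4 & H5 & H6). repeat split; try apply H1.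
  - apply map_eq_eq; auto.
  - apply nth_ext with (d := emptymap) (d' := emptymap); auto.
    intros. apply map_eq_eq; auto.
  - extensionality e; auto.
  - extensionality e; auto.
Qed.

Lemma heq_hps_eq h1 h2 : heq h1 h2 -> hps_eq h1 h2.
Proof.
  intros (H1 & H2 & H3 & H4 & H5). repeat split; try apply H1.
  - rewrite H2. apply map_eq_refl.
  - rewrite H3; auto.
  - intros t. rewrite H3. apply map_eq_refl.
  - rewrite H4; auto.
  - rewrite H5; auto.
Qed.

Lemma heq_trans a b c : heq a b -> heq b c -> heq a c.
Proof.
  intros (A1&A2&A3&A4&A5) (B1&B2&B3&B4&B5). repeat split; try congruence.
  - intros H. apply B1, A1, H.
  - intros H. apply A1, B1, H.
Qed.

Lemma heq_sym a b : heq a b -> heq b a.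
Proof. intros (A1&A2&A3&A4&A5). repeat split; try congruence; apply A1. Qed.

Lemma heq_refl a : heq a a.
Proof. repeat split; auto. Qed.

Fixpoint forprog (body : nat -> prog) (n i : nat) : prog :=
  match n with O => Skip | S n' => Seq (body i) (forprog body n' (S i)) end.

Lemma sem_For_aux body : forall n i h,  (fix loop (n i : nat) (h0 : HPS) {struct n} : HPS :=
     match n with
     | 0%nat => h0
     | S n' => loop n' (S i) (sem (body i) h0)
     end) n i h = sem (forprog body n i) h.
Proof. induction n; intros; simpl; auto. Qed.
Lemma sem_For lo hi body : sem (For lo hi body) = sem (forprog body (hi - lo) lo).
Proof.
  extensionality h. simpl. apply sem_For_aux. Qed.

Fixpoint nnew (p : prog) : nat :=
  match p with
  | Apply g _ => match g with GH => 1 | _ => 0 end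
  | Seq p1 p2 => nnew p1 + nnew p2
  | For lo hi body =>
      (fix loop (n i : nat) {struct n} : nat :=
         match n with O => O | S n' => nnew (body i) + loop n' (S i) end) (hi - lo) lo
  | If _ p1 p2 => S (Nat.max (nnew p1) (nnew p2))
  | _ => 0
  end%nat.

Lemma nnew_For_aux body : forall n i, (fix loop (n i : nat) {struct n} : nat :=
         match n with O => O | S n' => nnew (body i) + loop n' (S i) end)%nat n i
   = nnew (forprog body n i).
Proof. induction n; intros; simpl; auto. Qed.
Lemma nnew_For lo hi body : nnew (For lo hi body) = nnew (forprog body (hi - lo) lo).
Proof. simpl. apply nnew_For_aux. Qed.

Lemma prog_ind2 (Q : prog -> Prop) :
  Q Skip -> (forall q, Q (Init q)) -> (forall g q, Q (Apply g q)) ->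
  (forall q c, Q (Measure q c)) -> (forall c1 f c2, Q (Assign c1 f c2)) ->
  (forall p1 p2, Q p1 -> Q p2 -> Q (Seq p1 p2)) ->
  (forall b p1 p2, Q p1 -> Q p2 -> Q (If b p1 p2)) ->
  (forall lo hi body, Q (forprog body (hi - lo) lo) -> Q (For lo hi body)) ->
  forall p, Q p.
Proof.
  intros H0 H1 H2 H3 H4 H5 H6 H7. induction p; auto.
  apply H7. assert (forall n i, Q (forprog body n i)) as HH.
  { induction n; intros; simpl; auto. } apply HH.
Qed.

Definition lastm (h : HPS) : amap := last (hcl h) emptymap.

Fixpoint brf (ha : HPS) (b : bexp) : Prop :=
  match b with
  | BConst _ => True
  | BCReg c => lastm ha c = None
  | BQReg q => hqu ha q = None
  | BNot b1 => brf ha b1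
  | BAnd b1 b2 | BXor b1 b2 => brf ha b1 /\ brf ha b2
  end.

Fixpoint rf (ha : HPS) (p : prog) : Prop :=
  match p with
  | Skip => True
  | Init q | Apply _ q => hqu ha q = None
  | Measure q c => hqu ha q = None /\ lastm ha c = None
  | Assign c1 _ c2 => lastm ha c1 = None /\ lastm ha c2 = None
  | Seq p1 p2 => rf ha p1 /\ rf ha p2
  | For lo hi body => forall i, (lo <= i < hi)%nat -> rf ha (body i)
  | If b p1 p2 => brf ha b /\ rf ha p1 /\ rf ha p2
  end.

Lemma rf_For ha lo hi body : rf ha (For lo hi body) -> rf ha (forprog body (hi - lo) lo).
Proof.
  simpl. intros H. assert (H' : forall i, (lo <= i < lo + (hi - lo))%nat -> rf ha (body i)).
  { intros i Hi. apply H. lia. }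
  clear H. revert H'. assert (forall n l, (forall i, (l <= i < l + n)%nat -> rf ha (body i)) -> rf ha (forprog body n l)) as HH.
  { induction n; intros l H; simpl; auto.
  split.
  - apply H. lia.
  - apply IHn. intros. apply H. lia. }
  apply HH.
Qed.

Lemma rf_ext ha ha' p : hqu ha = hqu ha' -> lastm ha = lastm ha' -> rf ha p -> rf ha' p.
Proof.
  intros Hq Hl. assert (Hb : forall b, brf ha b -> brf ha' b).
  { induction b; simpl; try rewrite Hq; try rewrite Hl; intuition. }
  induction p; simpl; try rewrite Hq; try rewrite Hl; intuition.
Qed.

Lemma last_nth (l : list amap) d : last l d = nth (pred (length l)) l d.
Proof.
  induction l as [|a l IH]; simpl; auto.
  destruct l; simpl in *; auto.
Qed.

Lemma length_pad l n : (length l <= n)%nat -> length (pad l n) = n.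
Proof. intros. unfold pad. rewrite length_app, repeat_length. lia. Qed.

Lemma last_pad (l : list amap) n : last (pad l n) emptymap = last l emptymap.
Proof.
  unfold pad. destruct (n - length l)%nat as [|k]; [simpl; rewrite app_nil_r; auto|].
  replace (S k) with (k + 1)%nat by lia. rewrite repeat_app, app_assoc. simpl. rewrite last_last. auto.
Qed.

Lemma pad_len (l : list amap) : pad l (length l) = l.
Proof. unfold pad. rewrite Nat.sub_diag. simpl. apply app_nil_r. Qed.

Lemma pad_pad (l : list amap) n1 n2 : (length l <= n1 <= n2)%nat -> pad (pad l n1) n2 = pad l n2.
Proof.
  intros H. unfold pad at 1. rewrite last_pad. rewrite length_pad by lia.
  unfold pad. rewrite <- app_assoc, <- repeat_app. f_equal. f_equal. lia.
Qed.

Lemma nth_pad (l : list amap) n t : (length l <= n)%nat -> (t < n)%nat ->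
  nth t (pad l n) emptymap = nth (Nat.min t (pred (length l))) l emptymap.
Proof.
  intros H1 H2. unfold pad. destruct (Nat.lt_ge_cases t (length l)).
  - rewrite app_nth1 by auto. f_equal. lia.
  - rewrite app_nth2 by auto. rewrite nth_repeat_lt by lia. rewrite last_nth. f_equal. lia.
Qed.

Lemma In_lminus j l1 l2 : In j (lminus l1 l2) <-> In j l1 /\ ~ In j l2.
Proof.
  unfold lminus. rewrite filter_In. rewrite negb_true_iff.
  split; intros [H1 H2]; split; auto.
  - intros H. rewrite <- not_true_iff_false in H2. apply H2. apply existsb_exists. exists j. rewrite Nat.eqb_refl. auto.
  - apply not_true_iff_false. intros H. apply existsb_exists in H. destruct H as (x & Hx & E).
    apply Nat.eqb_eq in E. subst. auto.
Qed.

Lemma hplus_len A B : length (hcl (hplus A B)) = Nat.max (length (hcl A)) (length (hcl B)).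
Proof.
  simpl. rewrite length_map, length_combine, !length_pad by lia. lia.
Qed.

Lemma sem_su : forall P X j, In j (hsu (sem P X)) <->
  In j (hsu X) \/ (maxl (hsu X) < j <= maxl (hsu X) + nnew P)%nat.
Proof.
  apply (prog_ind2 (fun P => forall X j, In j (hsu (sem P X)) <->
     In j (hsu X) \/ (maxl (hsu X) < j <= maxl (hsu X) + nnew P)%nat));
  try (intros; simpl; split; [intros H; left; auto | intros [H|H]; [auto|lia]]).
  - intros g q X j. destruct g; simpl;
    try (split; [intros H; left; auto | intros [H|H]; [auto|lia]]).
    rewrite in_app_iff. simpl. unfold fresh, maxl. split.
    + intros [H|[H|H]]; [left; auto| right; lia | contradiction].
    + intros [H|H]; [left; auto | right; left; lia].
  - intros p1 p2 IH1 IH2 X j. simpl. rewrite IH2. rewrite (maxl_char _ _ _ (IH1 X)). rewrite IH1.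
    split.
    + intros [[H|H]|H]; [left; auto | right; lia | right; lia].
    + intros [H|H]; [left; left; auto|]. destruct (le_lt_dec j (maxl (hsu X) + nnew p1)).
      * left; right; lia.
      * right; lia.
  - intros b p1 p2 IH1 IH2 X j. simpl.
    set (g := eval_bexp X b).
    set (X1 := sem p1 (scale g X)). set (X2 := sem p2 (scale (fun e => negb (g e)) X)).
    assert (M1 := maxl_char _ _ _ (IH1 (scale g X))). simpl in M1. fold X1 in M1.
    assert (M2 := maxl_char _ _ _ (IH2 (scale (fun e => negb (g e)) X))). simpl in M2. fold X2 in M2.
    rewrite !in_app_iff, In_lminus, fresh_maxl, maxl_app, M1, M2.
    unfold X1, X2. rewrite IH1, IH2. simpl.
    set (m := maxl (hsu X)).
    assert (Hm : forall x, In x (hsu X) -> (x <= m)%nat) by (intros; apply in_le_maxl; auto).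
    split.
    + intros [[H|H]|[[[H|H] H']|[H|H]]]; try (left; auto; fail); try (right; lia); contradiction.
    + intros [H|H]; [left; left; auto|].
      destruct (le_lt_dec j (m + nnew p1)); [left; right; lia|].
      destruct (le_lt_dec j (m + nnew p2)).
      * right. left. split; [right; lia|]. intros [H1|H1]; [apply Hm in H1|]; lia.
      * right. right. left. lia.
  - intros lo hi body IH X j. rewrite sem_For, nnew_For. apply IH.
Qed.

Lemma maxl_sem P X : maxl (hsu (sem P X)) = (maxl (hsu X) + nnew P)%nat.
Proof. apply maxl_char. apply sem_su. Qed.

Lemma sem_len : forall P X, (length (hcl X) <= length (hcl (sem P X)))%nat.
Proof.
  apply (prog_ind2 (fun P => forall X, (length (hcl X) <= length (hcl (sem P X)))%nat));
  try (intros; simpl; lia).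
  - intros g q X. destruct g; simpl; lia.
  - intros; simpl. rewrite length_app. simpl. lia.
  - intros; simpl. rewrite length_app. simpl. lia.
  - intros p1 p2 IH1 IH2 X. simpl. specialize (IH1 X). specialize (IH2 (sem p1 X)). lia.
  - intros b p1 p2 IH1 IH2 X. cbn [sem]. rewrite hplus_len.
    specialize (IH1 (scale (eval_bexp X b) X)). simpl in IH1. lia.
  - intros lo hi body IH X. rewrite sem_For. apply IH.
Qed.

Definition tok (X ha : HPS) : Prop :=
  (forall q, hqu X q <> None -> hqu ha q = None) /\ length (hcl X) = length (hcl ha) /\
  (forall t c, nth t (hcl X) emptymap c <> None -> nth t (hcl ha) emptymap c = None).

Definition padha (ha : HPS) (n : nat) : HPS :=
  mkHPS (hsu ha) (hqu ha) (pad (hcl ha) n) (hP ha) (hs ha).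

Lemma padha_id ha : padha ha (length (hcl ha)) = ha.
Proof. destruct ha. unfold padha. simpl. rewrite pad_len. auto. Qed.

Lemma padha_padha ha n1 n2 : (length (hcl ha) <= n1 <= n2)%nat -> padha (padha ha n1) n2 = padha ha n2.
Proof. intros. unfold padha. simpl. rewrite pad_pad; auto. Qed.

Lemma lastm_padha ha n : lastm (padha ha n) = lastm ha.
Proof. unfold lastm, padha. simpl. apply last_pad. Qed.

Lemma nth_over (l : list amap) t : (length l <= t)%nat -> nth t l emptymap = emptymap.
Proof. intros. apply nth_overflow. auto. Qed.

Lemma htop_nth X : htop X = nth (pred (length (hcl X))) (hcl X) emptymap.
Proof. unfold htop. apply last_nth. Qed.

Lemma tok_top X ha c : tok X ha -> htop X c <> None -> lastm ha c = None.
Proof.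
  intros (T1 & T2 & T3) H. unfold lastm. rewrite last_nth. rewrite <- T2.
  apply T3. rewrite <- htop_nth. auto.
Qed.

Lemma tok_push X ha m : tok X ha -> (forall c, m c <> None -> lastm ha c = None) ->
  tok (push_cl X m) (padha ha (length (hcl (push_cl X m)))).
Proof.
  intros (T1 & T2 & T3) Hm. simpl. rewrite length_app. simpl.
  unfold padha, pad. simpl. rewrite <- T2. replace (length (hcl X) + 1 - length (hcl X))%nat with 1%nat by lia.
  unfold tok; simpl. repeat split; auto.
  - rewrite !length_app. simpl. lia.
  - intros t c H. destruct (Nat.lt_ge_cases t (length (hcl X))).
    + rewrite app_nth1 in * by lia. auto.
    + rewrite app_nth2 in * by lia. rewrite <- T2. destruct (t - length (hcl X))%nat as [|k] eqn:E.
      * simpl in *. apply Hm in H. auto.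
      * simpl in H. destruct k; simpl in H; contradiction.
Qed.

Lemma nth_mapcomb (F : amap -> amap -> amap) (l1 l2 : list amap) t :
  length l1 = length l2 -> (t < length l1)%nat ->
  nth t (map (fun mm => F (fst mm) (snd mm)) (combine l1 l2)) emptymap =
  F (nth t l1 emptymap) (nth t l2 emptymap).
Proof.
  revert l2 t. induction l1 as [|a l1 IH]; intros l2 t H1 H2; simpl in *; [lia|].
  destruct l2 as [|b l2]; simpl in *; [lia|]. destruct t; simpl; auto. apply IH; lia.
Qed.

Lemma hplus_nth X1 X2 t : (t < Nat.max (length (hcl X1)) (length (hcl X2)))%nat ->
  nth t (hcl (hplus X1 X2)) emptymap =
  mselect (fresh (hsu X1 ++ hsu X2))
    (nth (Nat.min t (pred (length (hcl X1)))) (hcl X1) emptymap)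
    (nth (Nat.min t (pred (length (hcl X2)))) (hcl X2) emptymap).
Proof.
  intros H. simpl. rewrite nth_mapcomb with (F := mselect (fresh (hsu X1 ++ hsu X2))).
  - rewrite !nth_pad by lia. auto.
  - rewrite !length_pad by lia. auto.
  - rewrite !length_pad by lia. auto.
Qed.

Lemma mselect_none yf m1 m2 a : mselect yf m1 m2 a <> None -> m1 a <> None \/ m2 a <> None.
Proof. unfold mselect. intros H. destruct (m1 a), (m2 a); try (left; discriminate); try (right; discriminate). contradiction. Qed.

Lemma nth_pad_min (sa : list amap) n1 N t : (length sa <= n1 <= N)%nat -> (t < N)%nat ->
  nth (Nat.min t (pred n1)) (pad sa n1) emptymap = nth t (pad sa N) emptymap.
Proof.
  intros H1 H2. destruct (Nat.eq_dec n1 0) as [E|E].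
  - subst. destruct sa; simpl in H1; [|lia]. unfold pad. simpl. rewrite nth_repeat.
    destruct (Nat.min t 0); auto.
  - rewrite !nth_pad by lia. f_equal. lia.
Qed.

Lemma tok_sem : forall P X ha, tok X ha -> rf ha P ->
  tok (sem P X) (padha ha (length (hcl (sem P X)))).
Proof.
  apply (prog_ind2 (fun P => forall X ha, tok X ha -> rf ha P ->
    tok (sem P X) (padha ha (length (hcl (sem P X)))))).
  - intros X ha T _. simpl. destruct T as (T1&T2&T3). rewrite T2, padha_id. repeat split; auto.
  - intros q X ha T R. simpl. destruct T as (T1&T2&T3). rewrite T2, padha_id. simpl in R.
    repeat split; auto. simpl. intros a. unfold mupd. destruct (Nat.eqb_spec a q); subst; auto.
  - intros g q X ha T R. simpl in R. destruct T as (T1&T2&T3). destruct g; simpl; rewrite T2, padha_id;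
    repeat split; auto; simpl; intros a; unfold mupd; destruct (Nat.eqb_spec a q); subst; auto.
  - intros q c X ha T R. simpl in R. cbn [sem]. apply tok_push; auto.
    intros c' H. unfold mupd in H. destruct (Nat.eqb_spec c' c); subst; [tauto|].
    eapply tok_top; eauto.
  - intros c1 f c2 X ha T R. simpl in R. cbn [sem]. apply tok_push; auto.
    intros c' H. unfold mupd in H. destruct (Nat.eqb_spec c' c1); subst; [tauto|].
    eapply tok_top; eauto.
  - intros p1 p2 IH1 IH2 X ha T R. simpl in R. destruct R as [R1 R2]. cbn [sem].
    specialize (IH1 X ha T R1).
    assert (R2' : rf (padha ha (length (hcl (sem p1 X)))) p2).
    { eapply rf_ext; [| |exact R2]; auto. rewrite lastm_padha. auto. }
    specialize (IH2 _ _ IH1 R2').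
    rewrite padha_padha in IH2; auto.
    destruct T as (T1&T2&T3). rewrite <- T2. split; [apply sem_len|apply sem_len].
  - intros b p1 p2 IH1 IH2 X ha T R. simpl in R. destruct R as (Rb & R1 & R2). cbn [sem].
    set (g := eval_bexp X b).
    assert (T1' := IH1 (scale g X) ha T R1).
    assert (T2' := IH2 (scale (fun e => negb (g e)) X) ha T R2).
    set (X1 := sem p1 (scale g X)) in *. set (X2 := sem p2 (scale (fun e => negb (g e)) X)) in *.
    assert (L1 := sem_len p1 (scale g X)). assert (L2 := sem_len p2 (scale (fun e => negb (g e)) X)).
    fold X1 in L1. fold X2 in L2. simpl in L1, L2.
    destruct T as (Ta&Tb&Tc). destruct T1' as (A1&A2&A3). destruct T2' as (B1&B2&B3).
    rewrite hplus_len. repeat split.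
    + intros q H. simpl in H. apply mselect_none in H. destruct H as [H|H]; [apply A1 in H|apply B1 in H]; auto.
    + simpl. rewrite length_map, length_combine, !length_pad by lia. lia.
    + intros t c H. destruct (Nat.lt_ge_cases t (Nat.max (length (hcl X1)) (length (hcl X2)))) as [Ht|Ht].
      2:{ rewrite nth_over in H; [contradiction|]. rewrite hplus_len. lia. }
      rewrite hplus_nth in H by auto. apply mselect_none in H. simpl.
      destruct H as [H|H].
      * destruct (Nat.eq_dec (length (hcl X1)) 0) as [E|E].
        { rewrite nth_over in H; [contradiction|lia]. }
        apply A3 in H. simpl in H. rewrite nth_pad_min with (N := Nat.max (length (hcl X1)) (length (hcl X2))) in H; auto; lia.
      * destruct (Nat.eq_dec (length (hcl X2)) 0) as [E|E].
        { rewrite nth_over in H; [contradiction|lia]. }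
        apply B3 in H. simpl in H. rewrite nth_pad_min with (N := Nat.max (length (hcl X1)) (length (hcl X2))) in H; auto; lia.
  - intros lo hi body IH X ha T R. rewrite sem_For. apply IH; auto. apply rf_For; auto.
Qed.

Definition stk (r : nat -> nat) (sX sa : list amap) : list amap :=
  map (rename_map r) (map (fun mm => munion (fst mm) (snd mm)) (combine sX sa)).

Lemma hcl_rt r X ha : hcl (rename r (tensor X ha)) = stk r (hcl X) (hcl ha).
Proof. reflexivity. Qed.

Lemma length_stk r sX sa : length sX = length sa -> length (stk r sX sa) = length sX.
Proof. intros. unfold stk. rewrite !length_map, length_combine. lia. Qed.

Lemma nth_stk r sX sa t : length sX = length sa ->
  nth t (stk r sX sa) emptymap = rename_map r (munion (nth t sX emptymap) (nth t sa emptymap)).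
Proof.
  unfold stk. revert sa t. induction sX as [|a sX IH]; intros sa t H; destruct sa as [|b sa]; simpl in *; try lia.
  - destruct t; reflexivity.
  - destruct t; simpl; auto.
Qed.

Lemma last_stk r sX sa : length sX = length sa ->
  last (stk r sX sa) emptymap = rename_map r (munion (last sX emptymap) (last sa emptymap)).
Proof.
  intros H. rewrite !last_nth. rewrite length_stk by auto. rewrite nth_stk by auto. rewrite H. auto.
Qed.

Lemma stk_push r sX sa m : length sX = length sa ->
  stk r (sX ++ [m]) (pad sa (length (sX ++ [m]))) = stk r sX sa ++ [rename_map r (munion m (last sa emptymap))].
Proof.
  intros H. unfold pad. rewrite length_app. simpl. rewrite <- H.
  replace (length sX + 1 - length sX)%nat with 1%nat by lia. simpl.
  generalize (last sa emptymap). intros x.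
  unfold stk. revert sa H. induction sX as [|a sX IH]; intros sa H; destruct sa as [|b sa]; simpl in *; try lia.
  - auto.
  - f_equal. apply IH. lia.
Qed.

Lemma mget_rename r m a e : mget (rename_map r m) a e = mget m a (rename_env r e).
Proof. unfold mget, rename_map. destruct (m a); auto. Qed.

Lemma munion_none m1 m2 a : m2 a = None -> munion m1 m2 a = m1 a.
Proof. unfold munion. destruct (m1 a); auto. Qed.

Lemma htop_rt Y X ha r : hcl Y = stk r (hcl X) (hcl ha) -> length (hcl X) = length (hcl ha) ->
  htop Y = rename_map r (munion (htop X) (lastm ha)).
Proof. intros H1 H2. unfold htop, lastm. rewrite H1. apply last_stk. auto. Qed.

Lemma eval_rn Y X ha r b : hqu Y = rename_map r (munion (hqu X) (hqu ha)) ->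
  htop Y = rename_map r (munion (htop X) (lastm ha)) -> brf ha b ->
  eval_bexp Y b = fun e => eval_bexp X b (rename_env r e).
Proof.
  intros Hq Ht. induction b; simpl; intros Hb; extensionality e; auto.
  - unfold curc. rewrite Ht, mget_rename. unfold mget. rewrite munion_none; auto.
  - unfold curq. rewrite Hq, mget_rename. unfold mget. rewrite munion_none; auto.
  - rewrite IHb; auto.
  - destruct Hb. rewrite IHb1, IHb2; auto.
  - destruct Hb. rewrite IHb1, IHb2; auto.
Qed.

Lemma curq_rn Y X ha r q : hqu Y = rename_map r (munion (hqu X) (hqu ha)) -> hqu ha q = None ->
  curq Y q = fun e => curq X q (rename_env r e).
Proof.
  intros Hq Hn. extensionality e. unfold curq. rewrite Hq, mget_rename. unfold mget. rewrite munion_none; auto.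
Qed.

Lemma curc_rn Y X ha r c : htop Y = rename_map r (munion (htop X) (lastm ha)) -> lastm ha c = None ->
  curc Y c = fun e => curc X c (rename_env r e).
Proof.
  intros Hq Hn. extensionality e. unfold curc. rewrite Hq, mget_rename. unfold mget. rewrite munion_none; auto.
Qed.

Lemma mselect_rn yf yfX r (A B C : amap) :
  (forall a, A a <> None -> C a = None) -> (forall a, B a <> None -> C a = None) -> r yfX = yf ->
  mselect yf (rename_map r (munion A C)) (rename_map r (munion B C)) = rename_map r (munion (mselect yfX A B) C).
Proof.
  intros HA HB Hy. extensionality a. unfold mselect, rename_map, munion, mget.
  destruct (A a) eqn:EA, (B a) eqn:EB, (C a) eqn:EC; auto;
  try (exfalso; assert (X1 : A a <> None) by congruence; apply HA in X1; congruence);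
  try (exfalso; assert (X1 : B a <> None) by congruence; apply HB in X1; congruence);
  f_equal; extensionality e; simpl. all: try (subst; reflexivity). destruct (epath e yf); auto.
Qed.

Lemma rprod_forallb l e : rprod l e = if forallb (fun y => epath e y) l then 1 else 0.
Proof.
  induction l; simpl; auto. unfold rprod in *. simpl. rewrite IHl. unfold b2R.
  destruct (epath e a), (forallb _ l); simpl; ring.
Qed.

Lemma rprod_rn r l e : rprod l (rename_env r e) = rprod (map r l) e.
Proof. unfold rprod. rewrite map_map. reflexivity. Qed.

Lemma forallb_set (f : nat -> bool) l1 l2 : (forall j, In j l1 <-> In j l2) -> forallb f l1 = forallb f l2.
Proof.
  intros H. destruct (forallb f l1) eqn:E1, (forallb f l2) eqn:E2; auto.
  - rewrite forallb_forall in E1. rewrite <- not_true_iff_false in E2. exfalso. apply E2.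
    rewrite forallb_forall. intros x Hx. apply E1, H, Hx.
  - rewrite forallb_forall in E2. rewrite <- not_true_iff_false in E1. exfalso. apply E1.
    rewrite forallb_forall. intros x Hx. apply E2, H, Hx.
Qed.

Lemma rprod_set l1 l2 : (forall j, In j l1 <-> In j l2) -> rprod l1 = rprod l2.
Proof. intros H. extensionality e. rewrite !rprod_forallb. rewrite (forallb_set _ _ _ H). auto. Qed.

Definition newrel (r : nat -> nat) (X Y Z : HPS) : Prop :=
  forall j, In j (hsu Z) -> ~ In j (hsu X) -> r j = (j - maxl (hsu X) + maxl (hsu Y))%nat.

Lemma SUP P Y X ha r : (forall j, In j (hsu Y) <-> In j (map r (hsu X ++ hsu ha))) ->
  newrel r X Y (sem P X) ->
  forall j, In j (hsu (sem P Y)) <-> In j (map r (hsu (sem P X) ++ hsu ha)).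
Proof.
  intros H N j. rewrite sem_su. rewrite in_map_iff. split.
  - intros [Hj|Hj].
    + apply H in Hj. apply in_map_iff in Hj. destruct Hj as (x & <- & Hx).
      exists x. split; auto. rewrite in_app_iff in *. destruct Hx as [Hx|Hx]; auto.
      left. apply sem_su. auto.
    + exists (j - maxl (hsu Y) + maxl (hsu X))%nat.
      assert (Hn : ~ In (j - maxl (hsu Y) + maxl (hsu X))%nat (hsu X)).
      { intros Hi. apply in_le_maxl in Hi. lia. }
      assert (Hs : In (j - maxl (hsu Y) + maxl (hsu X))%nat (hsu (sem P X))).
      { apply sem_su. right. lia. }
      split; [rewrite N by auto; lia|]. apply in_app_iff; auto.
  - intros (x & <- & Hx). apply in_app_iff in Hx. destruct Hx as [Hx|Hx].
    + destruct (in_dec Nat.eq_dec x (hsu X)) as [Hi|Hi].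
      * left. apply H. apply in_map. apply in_app_iff. auto.
      * rewrite N by auto. apply sem_su in Hx. destruct Hx as [Hx|Hx]; [contradiction|]. right. lia.
    + left. apply H. apply in_map. apply in_app_iff. auto.
Qed.

Lemma LM r r' (A1 A2 B1 B2 H : list nat) : bij r r' ->
  (forall j, In j A1 <-> In j (map r (B1 ++ H))) -> (forall j, In j A2 <-> In j (map r (B2 ++ H))) ->
  (forall x, In x H -> In x B2 -> In x B1) ->
  forall j, In j (lminus A2 A1) <-> In j (map r (lminus B2 B1)).
Proof.
  intros Hb H1 H2 HH j. rewrite In_lminus, H1, H2, !in_map_iff. split.
  - intros [(x & <- & Hx) Hn]. exists x. split; auto. apply In_lminus. rewrite in_app_iff in Hx.
    destruct Hx as [Hx|Hx].
    + split; auto. intros Hx1. apply Hn. exists x. split; auto. apply in_app_iff; auto.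
    + exfalso. apply Hn. exists x. split; auto. apply in_app_iff; auto.
  - intros (x & <- & Hx). apply In_lminus in Hx. destruct Hx as [Hx2 Hx1]. split.
    + exists x. split; auto. apply in_app_iff; auto.
    + intros (x' & E & Hx'). apply (bij_inj _ _ _ _ Hb) in E. subst x'.
      apply in_app_iff in Hx'. destruct Hx'; auto.
Qed.

Lemma in_hplus_l X1 X2 j : In j (hsu X1) -> In j (hsu (hplus X1 X2)).
Proof. intros. simpl. apply in_app_iff. auto. Qed.

Lemma in_hplus_r X1 X2 j : In j (hsu X2) -> In j (hsu (hplus X1 X2)).
Proof.
  intros. simpl. apply in_app_iff. destruct (in_dec Nat.eq_dec j (hsu X1)); auto.
  right. apply in_app_iff. left. apply In_lminus. auto.
Qed.

Lemma in_hplus_f X1 X2 : In (fresh (hsu X1 ++ hsu X2)) (hsu (hplus X1 X2)).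
Proof. simpl. rewrite !in_app_iff. simpl. auto. Qed.

Definition RT (Y X ha : HPS) (r : nat -> nat) : Prop :=
  (forall j, In j (hsu Y) <-> In j (map r (hsu X ++ hsu ha))) /\
  hqu Y = rename_map r (munion (hqu X) (hqu ha)) /\
  hcl Y = stk r (hcl X) (hcl ha) /\
  hP Y = (fun e => hP X (rename_env r e) + hP ha (rename_env r e)) /\
  hs Y = (fun e => hs X (rename_env r e) * hs ha (rename_env r e)).

Lemma RT_heq Y X ha r : RT Y X ha r <-> heq Y (rename r (tensor X ha)).
Proof. unfold RT, heq. simpl. rewrite map_app. tauto. Qed.

Lemma G : forall P Y X ha r r', bij r r' -> tok X ha -> rf ha P ->
  (forall j, In j (hsu ha) -> In j (hsu (sem P X)) -> In j (hsu X)) ->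
  newrel r X Y (sem P X) -> RT Y X ha r ->
  RT (sem P Y) (sem P X) (padha ha (length (hcl (sem P X)))) r.
Proof.
  apply (prog_ind2 (fun P => forall Y X ha r r', bij r r' -> tok X ha -> rf ha P ->
  (forall j, In j (hsu ha) -> In j (hsu (sem P X)) -> In j (hsu X)) ->
  newrel r X Y (sem P X) -> RT Y X ha r ->
  RT (sem P Y) (sem P X) (padha ha (length (hcl (sem P X)))) r)).
  -
    intros Y X ha r r' Hb T R D N H. simpl. destruct T as (T1&T2&T3). rewrite T2, padha_id. auto.
  -
    intros q Y X ha r r' Hb T R D N H. destruct H as (Hsu&Hq&Hc&HP&Hs).
    split; [apply (SUP _ _ _ _ _ Hsu N)|]. simpl in R.
    destruct T as (T1&T2&T3). simpl. rewrite T2, pad_len.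
    rewrite Hq, Hc, HP, Hs. repeat split; auto.
    extensionality a. unfold mupd, rename_map, munion. destruct (Nat.eqb a q); auto.
  -
    intros g q Y X ha r r' Hb T R D N H. destruct H as (Hsu&Hq&Hc&HP&Hs).
    split; [apply (SUP _ _ _ _ _ Hsu N)|]. simpl in R.
    assert (Cq := curq_rn _ _ _ _ q Hq R).
    destruct T as (T1&T2&T3). destruct g; simpl; rewrite T2, pad_len;
    rewrite ?Cq, Hq, Hc, HP, Hs; repeat split; auto.
    + assert (Hy : r (fresh (hsu X)) = fresh (hsu Y)).
      { rewrite N. - rewrite !fresh_maxl. lia.
        - simpl. apply in_app_iff. simpl. auto.
        - intros Hi. apply in_le_maxl in Hi. rewrite fresh_maxl in Hi. lia. }
      extensionality a. unfold mupd, rename_map, munion. destruct (Nat.eqb a q); auto.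
      f_equal. extensionality e. simpl. rewrite Hy. auto.
    + extensionality e. assert (Hy : r (fresh (hsu X)) = fresh (hsu Y)).
      { rewrite N. - rewrite !fresh_maxl. lia.
        - simpl. apply in_app_iff. simpl. auto.
        - intros Hi. apply in_le_maxl in Hi. rewrite fresh_maxl in Hi. lia. }
      simpl. rewrite Hy. lra.
    + extensionality e. lra.
    + extensionality a. unfold mupd, rename_map, munion. destruct (Nat.eqb a q); auto.
    + extensionality e. lra.
  -
    intros q c Y X ha r r' Hb T R D N H. destruct H as (Hsu&Hq&Hc&HP&Hs).
    split; [apply (SUP _ _ _ _ _ Hsu N)|]. simpl in R. destruct R as [Rq Rc].
    assert (Cq := curq_rn _ _ _ _ q Hq Rq).
    destruct T as (T1&T2&T3).
    assert (Ht := htop_rt _ _ _ _ Hc T2).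
    cbn [sem push_cl hqu hcl hP hs padha]. rewrite Hq, HP, Hs, Hc, stk_push by auto.
    repeat split; auto. f_equal. f_equal.
    rewrite Ht, Cq. extensionality a. unfold mupd, rename_map, munion. destruct (Nat.eqb a c); auto.
  -
    intros c1 f c2 Y X ha r r' Hb T R D N H. destruct H as (Hsu&Hq&Hc&HP&Hs).
    split; [apply (SUP _ _ _ _ _ Hsu N)|]. simpl in R. destruct R as [Rc1 Rc2].
    destruct T as (T1&T2&T3).
    assert (Ht := htop_rt _ _ _ _ Hc T2).
    assert (Cc := curc_rn _ _ _ _ c2 Ht Rc2).
    cbn [sem push_cl hqu hcl hP hs padha]. rewrite Hq, HP, Hs, Hc, stk_push by auto.
    repeat split; auto. f_equal. f_equal.
    rewrite Ht, Cc. extensionality a. unfold mupd, rename_map, munion. destruct (Nat.eqb a c1); auto.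
  -
    intros p1 p2 IH1 IH2 Y X ha r r' Hb T R D N H. simpl in R. destruct R as [R1 R2]. cbn [sem] in *.
    assert (H1 : RT (sem p1 Y) (sem p1 X) (padha ha (length (hcl (sem p1 X)))) r).
    { apply (IH1 _ _ _ _ r'); auto.
      - intros j Hj Hj'. apply D; auto. apply sem_su. left. auto.
      - intros j Hj Hn. apply N; auto. apply sem_su. left. auto. }
    assert (T' := tok_sem p1 X ha T R1).
    assert (R2' : rf (padha ha (length (hcl (sem p1 X)))) p2).
    { eapply rf_ext; [| |exact R2]; auto. rewrite lastm_padha. auto. }
    assert (H2 := IH2 (sem p1 Y) _ _ _ r' Hb T' R2').
    rewrite padha_padha in H2.
    + apply H2; auto.
      * intros j Hj Hj'. simpl in Hj. apply sem_su. left. apply D; auto.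
      * intros j Hj Hn. rewrite N; auto.
        -- rewrite !maxl_sem. apply sem_su in Hj. destruct Hj as [Hj|Hj]; [contradiction|].
           rewrite maxl_sem in Hj. lia.
        -- intros Hi. apply Hn. apply sem_su. left. auto.
    + destruct T as (T1&T2&T3). rewrite <- T2. split; [apply sem_len|apply sem_len].
  -
    intros b p1 p2 IH1 IH2 Y X ha r r' Hb T R D N H. assert (H0 := H). destruct H as (Hsu&Hq&Hc&HP&Hs).
    split; [apply (SUP _ _ _ _ _ Hsu N)|]. simpl in R. destruct R as (Rb & R1 & R2).
    assert (T0 := T). destruct T0 as (Ta&Tb&Tc).
    assert (Ht := htop_rt _ _ _ _ Hc Tb).
    assert (Hg := eval_rn _ _ _ _ b Hq Ht Rb).
    cbn [sem] in *. rewrite Hg. set (gX := eval_bexp X b) in *.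
    set (X1 := sem p1 (scale gX X)) in *. set (X2 := sem p2 (scale (fun e => negb (gX e)) X)) in *.
    set (Y1 := sem p1 (scale (fun e => gX (rename_env r e)) Y)).
    set (Y2 := sem p2 (scale (fun e => negb (gX (rename_env r e))) Y)).
    assert (HY1 : RT Y1 X1 (padha ha (length (hcl X1))) r).
    { apply (IH1 _ _ _ _ r'); auto.
      - intros j Hj Hj'. apply D; auto. apply in_hplus_l. auto.
      - intros j Hj Hn. apply N; auto. apply in_hplus_l. auto.
      - unfold RT. simpl. repeat split; auto; try apply Hsu.
        rewrite Hs. extensionality e. ring. }
    assert (HY2 : RT Y2 X2 (padha ha (length (hcl X2))) r).
    { apply (IH2 _ _ _ _ r'); auto.
      - intros j Hj Hj'. apply D; auto. apply in_hplus_r. auto.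
      - intros j Hj Hn. apply N; auto. apply in_hplus_r. auto.
      - unfold RT. simpl. repeat split; auto; try apply Hsu.
        rewrite Hs. extensionality e. ring. }
    assert (TT1 := tok_sem p1 (scale gX X) ha T R1). fold X1 in TT1.
    assert (TT2 := tok_sem p2 (scale (fun e => negb (gX e)) X) ha T R2). fold X2 in TT2.
    assert (L1 := sem_len p1 (scale gX X)). assert (L2 := sem_len p2 (scale (fun e => negb (gX e)) X)).
    fold X1 in L1. fold X2 in L2. simpl in L1, L2.
    assert (M1 := maxl_sem p1 (scale gX X)). assert (M2 := maxl_sem p2 (scale (fun e => negb (gX e)) X)).
    assert (M1' := maxl_sem p1 (scale (fun e => gX (rename_env r e)) Y)).
    assert (M2' := maxl_sem p2 (scale (fun e => negb (gX (rename_env r e))) Y)).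
    fold X1 in M1. fold X2 in M2. fold Y1 in M1'. fold Y2 in M2'. simpl in M1, M2, M1', M2'.
    assert (Hy : r (fresh (hsu X1 ++ hsu X2)) = fresh (hsu Y1 ++ hsu Y2)).
    { rewrite N.
      - rewrite !fresh_maxl, !maxl_app. lia.
      - apply in_hplus_f.
      - intros Hi. apply in_le_maxl in Hi. rewrite fresh_maxl, maxl_app in Hi. lia. }
    destruct HY1 as (S1&Q1&C1&P1&SS1). destruct HY2 as (S2&Q2&C2&P2&SS2).
    destruct TT1 as (A1&A2&A3). destruct TT2 as (B1&B2&B3). simpl in A1, A2, A3, B1, B2, B3, Q1, Q2, C1, C2, P1, P2, SS1, SS2.
    rewrite length_pad in A2, B2 by lia.
    assert (HX : forall x, In x (hsu ha) -> In x (hsu X2) -> In x (hsu X1)).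
    { intros x Hx Hx2. apply sem_su. left. apply D; auto. apply in_hplus_r. auto. }
    assert (HX' : forall x, In x (hsu ha) -> In x (hsu X1) -> In x (hsu X2)).
    { intros x Hx Hx2. apply sem_su. left. apply D; auto. apply in_hplus_l. auto. }
    cbn [hplus hqu hcl hP hs padha]. repeat split.
    + rewrite Q1, Q2. apply mselect_rn; auto.
    + set (NN := Nat.max (length (hcl X1)) (length (hcl X2))).
      assert (LY1 : length (hcl Y1) = length (hcl X1)).
      { rewrite C1. apply length_stk. rewrite length_pad; lia. }
      assert (LY2 : length (hcl Y2) = length (hcl X2)).
      { rewrite C2. apply length_stk. rewrite length_pad; lia. }
      change (hcl (hplus Y1 Y2) = stk r (hcl (hplus X1 X2)) (pad (hcl ha) (length (hcl (hplus X1 X2))))).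
      rewrite hplus_len. fold NN.
      apply nth_ext with (d := emptymap) (d' := emptymap).
      * rewrite hplus_len, length_stk, hplus_len; [lia|]. rewrite hplus_len, length_pad; lia.
      * intros t Ht'. rewrite hplus_len in Ht'. rewrite hplus_nth by lia.
        rewrite nth_stk by (rewrite hplus_len, length_pad; lia).
        rewrite hplus_nth by lia. rewrite LY1, LY2. rewrite C1, C2.
        rewrite !nth_stk by (rewrite length_pad; lia).
        rewrite !(nth_pad_min (hcl ha) _ NN t) by lia.
        apply mselect_rn; auto.
        -- intros a Ha. apply A3 in Ha. rewrite nth_pad_min with (N := NN) in Ha by lia. auto.
        -- intros a Ha. apply B3 in Ha. rewrite nth_pad_min with (N := NN) in Ha by lia. auto.
    + rewrite P1, P2. extensionality e. simpl. rewrite Hy. destruct (epath e _); ring.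
    + rewrite SS1, SS2. extensionality e. simpl. rewrite Hy.
      rewrite (rprod_set (lminus (hsu Y2) (hsu Y1)) (map r (lminus (hsu X2) (hsu X1)))).
      2:{ apply (LM r r' _ _ _ _ (hsu ha)); auto. }
      rewrite (rprod_set (lminus (hsu Y1) (hsu Y2)) (map r (lminus (hsu X1) (hsu X2)))).
      2:{ apply (LM r r' _ _ _ _ (hsu ha)); auto. }
      rewrite !rprod_rn. destruct (epath e _); ring.
  - intros lo hi body IH Y X ha r r' Hb T R D N H. rewrite sem_For in *. apply (IH _ _ _ _ r'); auto.
    apply rf_For; auto.
Qed.

Definition pdep {T : Type} (l : list nat) (f : env -> T) : Prop :=
  forall e1 e2, (forall i, ein e1 i = ein e2 i) -> (forall j, In j l -> epath e1 j = epath e2 j) -> f e1 = f e2.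

Definition sdep (Z : HPS) : Prop :=
  (forall q p, hqu Z q = Some p -> pdep (hsu Z) p) /\
  (forall m, In m (hcl Z) -> forall c p, m c = Some p -> pdep (hsu Z) p) /\
  pdep (hsu Z) (hP Z) /\ pdep (hsu Z) (hs Z).

Lemma dep_pdep {T : Type} (I l : list nat) (f : env -> T) :
  dep_only (fun i => In i I) (fun j => In j l) f -> pdep l f.
Proof. intros H e1 e2 H1 H2. apply H; auto. Qed.

Lemma wf_sdep Z : wf_hps Z -> sdep Z.
Proof.
  intros (_ & _ & _ & I & H1 & H2 & H3 & H4 & _). repeat split.
  - intros q p E. apply (dep_pdep I). eapply H1; eauto.
  - intros m Hm c p E. apply (dep_pdep I). eapply H2; eauto.
  - apply (dep_pdep I); eauto.
  - apply (dep_pdep I); eauto.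
Qed.

Lemma pdep_incl {T : Type} l l' (f : env -> T) : pdep l f -> (forall j, In j l -> In j l') -> pdep l' f.
Proof. intros H Hi e1 e2 E1 E2. apply H; auto. Qed.

Lemma pdep_rn {T : Type} l (f : env -> T) r1 r2 : pdep l f -> (forall j, In j l -> r1 j = r2 j) ->
  forall e, f (rename_env r1 e) = f (rename_env r2 e).
Proof. intros H Hr e. apply H; simpl; auto. Qed.

Lemma rename_map_ext m l r1 r2 : (forall c p, m c = Some p -> pdep l p) -> (forall j, In j l -> r1 j = r2 j) ->
  rename_map r1 m = rename_map r2 m.
Proof.
  intros H Hr. extensionality a. unfold rename_map. destruct (m a) eqn:E; auto.
  f_equal. extensionality e. eapply pdep_rn; eauto.
Qed.

Lemma munion_pdep m1 m2 l1 l2 : (forall c p, m1 c = Some p -> pdep l1 p) -> (forall c p, m2 c = Some p -> pdep l2 p) ->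
  forall c p, munion m1 m2 c = Some p -> pdep (l1 ++ l2) p.
Proof.
  intros H1 H2 c p. unfold munion. destruct (m1 c) eqn:E.
  - intros [=<-]. eapply pdep_incl; [eapply H1; eauto|]. intros; apply in_app_iff; auto.
  - intros E2. eapply pdep_incl; [eapply H2; eauto|]. intros; apply in_app_iff; auto.
Qed.

Lemma stk_ext r1 r2 sX sa lX la :
  (forall m, In m sX -> forall c p, m c = Some p -> pdep lX p) ->
  (forall m, In m sa -> forall c p, m c = Some p -> pdep la p) ->
  (forall j, In j (lX ++ la) -> r1 j = r2 j) -> stk r1 sX sa = stk r2 sX sa.
Proof.
  intros H1 H2 Hr. unfold stk. revert sa H2. induction sX as [|a sX IH]; intros sa H2; [auto|].
  destruct sa as [|b sa]; [auto|]. simpl. f_equal.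
  - eapply rename_map_ext; [|exact Hr]. apply munion_pdep; [apply H1|apply H2]; simpl; auto.
  - apply IH; auto. intros m Hm. apply H1. simpl; auto. intros m Hm. apply H2. simpl; auto.
Qed.

Lemma RT_ext Y X ha r1 r2 : sdep X -> sdep ha -> (forall j, In j (hsu X ++ hsu ha) -> r1 j = r2 j) ->
  RT Y X ha r1 -> RT Y X ha r2.
Proof.
  intros (X1&X2&X3&X4) (A1&A2&A3&A4) Hr (Hsu&Hq&Hc&HP&Hs). repeat split.
  - intros Hj. apply Hsu in Hj. erewrite map_ext_in; eauto. intros; symmetry; auto.
  - intros Hj. apply Hsu. erewrite map_ext_in; eauto.
  - rewrite Hq. eapply rename_map_ext; [|exact Hr]. apply munion_pdep; auto.
  - rewrite Hc. eapply stk_ext; eauto.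
  - rewrite HP. extensionality e. f_equal; eapply pdep_rn; eauto; intros; apply Hr; apply in_app_iff; auto.
  - rewrite Hs. extensionality e. f_equal; eapply pdep_rn; eauto; intros; apply Hr; apply in_app_iff; auto.
Qed.

Definition shiftK (K : nat) (l : list nat) (x : nat) : nat :=
  (if Nat.ltb x K then (if in_dec Nat.eq_dec x l then x + K else x)
  else (if in_dec Nat.eq_dec (x - K)%nat l then x - K else x))%nat.

Lemma shift_invol K l x : (forall j, In j l -> j < K)%nat -> shiftK K l (shiftK K l x) = x.
Proof.
  intros HK. unfold shiftK.
  destruct (Nat.ltb_spec x K).
  - destruct (in_dec Nat.eq_dec x l).
    + destruct (Nat.ltb_spec (x + K)%nat K); [lia|]. replace (x + K - K)%nat with x by lia.
      destruct (in_dec Nat.eq_dec x l); [auto|contradiction].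
    + destruct (Nat.ltb_spec x K); [|lia]. destruct (in_dec Nat.eq_dec x l); [contradiction|auto].
  - destruct (in_dec Nat.eq_dec (x - K)%nat l).
    + assert (x - K < K)%nat by (apply HK; auto).
      destruct (Nat.ltb_spec (x - K)%nat K); [|lia].
      destruct (in_dec Nat.eq_dec (x - K)%nat l); [lia|contradiction].
    + destruct (Nat.ltb_spec x K); [lia|]. destruct (in_dec Nat.eq_dec (x - K)%nat l); [contradiction|auto].
Qed.

Lemma shift_in K l x : (forall j, In j l -> j < K)%nat -> In x l -> shiftK K l x = (x + K)%nat.
Proof.
  intros HK H. unfold shiftK. assert (x < K)%nat by auto. destruct (Nat.ltb_spec x K); [|lia].
  destruct (in_dec Nat.eq_dec x l); [auto|contradiction].
Qed.

Lemma shift_out K l x : (x < K)%nat -> ~ In x l -> shiftK K l x = x.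
Proof.
  intros H1 H2. unfold shiftK. destruct (Nat.ltb_spec x K); [|lia].
  destruct (in_dec Nat.eq_dec x l); [contradiction|auto].
Qed.

Lemma rename_env_comp r1 r2 e : rename_env r2 (rename_env r1 e) = rename_env (fun j => r1 (r2 j)) e.
Proof. reflexivity. Qed.

Lemma rename_env_ext r1 r2 e : (forall j, r1 j = r2 j) -> rename_env r1 e = rename_env r2 e.
Proof. intros H. unfold rename_env. f_equal. extensionality j. rewrite H. auto. Qed.

Lemma munion_rn r A B : rename_map r (munion A B) = munion (rename_map r A) (rename_map r B).
Proof. extensionality a. unfold rename_map, munion. destruct (A a); auto. Qed.

Lemma Shift Y X ha r K : sdep X -> (forall j, In j (hsu X) -> ~ In j (hsu ha)) ->
  (forall j, In j (hsu ha) -> j < K)%nat -> (forall j, In j (hsu X) -> j < K)%nat ->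
  RT Y X ha r -> RT Y X (rename (shiftK K (hsu ha)) ha) (fun j => r (shiftK K (hsu ha) j)).
Proof.
  intros (X1&X2&X3&X4) Hd HK HKX (Hsu&Hq&Hc&HP&Hs). set (s := shiftK K (hsu ha)).
  assert (Hss : forall j, s (s j) = j) by (intros; apply shift_invol; auto).
  assert (HsX : forall j, In j (hsu X) -> s j = j).
  { intros j Hj. apply shift_out; auto. }
  assert (Hrs : forall e, rename_env (fun j => s (s j)) e = e).
  { intros e. destruct e. unfold rename_env. simpl. f_equal. extensionality j. rewrite Hss. auto. }
  assert (Hm : forall m, rename_map r m = rename_map (fun j => r (s j)) (rename_map s m)).
  { intros m. extensionality a. unfold rename_map. destruct (m a); auto. f_equal. extensionality e.
    rewrite rename_env_comp. f_equal. apply rename_env_ext. intros; rewrite Hss; auto. }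
  assert (HmX : forall m, (forall c p, m c = Some p -> pdep (hsu X) p) -> rename_map r m = rename_map (fun j => r (s j)) m).
  { intros m H. eapply rename_map_ext; eauto. intros j Hj. rewrite HsX; auto. }
  repeat split.
  - intros Hj. apply Hsu in Hj. simpl. rewrite map_app, map_map. rewrite map_app in Hj.
    rewrite (map_ext_in (fun j0 => r (s j0)) r (hsu X)) by (intros; rewrite HsX; auto).
    rewrite (map_ext (fun x => r (s (s x))) r) by (intros; rewrite Hss; auto). exact Hj.
  - intros Hj. apply Hsu. simpl in Hj. rewrite map_app, map_map in Hj. rewrite map_app.
    rewrite (map_ext_in (fun j0 => r (s j0)) r (hsu X)) in Hj by (intros; rewrite HsX; auto).
    rewrite (map_ext (fun x => r (s (s x))) r) in Hj by (intros; rewrite Hss; auto). exact Hj.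
  - rewrite Hq. simpl. rewrite !munion_rn. f_equal; auto.
  - rewrite Hc. simpl. unfold stk. clear Hc Hq Hsu.
    revert X2. generalize (hcl ha). induction (hcl X) as [|x sX IH]; intros sa X2; [auto|].
    destruct sa as [|b sa]; [auto|]. simpl. f_equal.
    + rewrite !munion_rn. f_equal; auto. apply HmX. intros c p E. eapply X2; simpl; eauto.
    + apply IH. intros m Hm'. apply X2. simpl. auto.
  - rewrite HP. extensionality e. simpl. f_equal.
    + eapply pdep_rn; eauto. intros; rewrite HsX; auto.
    + rewrite rename_env_comp. f_equal. symmetry. rewrite <- (Hrs (rename_env r e)) at 1. reflexivity.
  - rewrite Hs. extensionality e. simpl. f_equal.
    + eapply pdep_rn; eauto. intros; rewrite HsX; auto.
    + rewrite rename_env_comp. f_equal. symmetry. rewrite <- (Hrs (rename_env r e)) at 1. reflexivity.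
Qed.

Definition NE (A : list (nat -> bool)) (H : (nat -> bool) -> list (nat -> option bool))
  (Kt : (nat -> bool) -> (nat -> option bool)) (S Pf : (nat -> bool) -> R) : R :=
  rsum (cdedup (map H A)) (fun eta =>
  rsum (cdedup (map Kt A)) (fun k =>
    let sel := fun y => ceqb (H y) eta && ceqb (Kt y) k in
    let re := rsum A (fun y => if sel y then S y * cos (2 * PI * Pf y) else 0) in
    let im := rsum A (fun y => if sel y then S y * sin (2 * PI * Pf y) else 0) in
    re * re + im * im)).

Lemma norm2_NE h x : hps_norm2 h x = NE (assigns (hsu h)) (fun y => hist_at h (Env x y))
  (fun y => ket_at h (Env x y)) (fun y => hs h (Env x y)) (fun y => hP h (Env x y)).
Proof. reflexivity. Qed.

Lemma rsum_map {T U : Type} (f : T -> U) l g : rsum (map f l) g = rsum l (fun x => g (f x)).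
Proof. unfold rsum. rewrite map_map. auto. Qed.

Lemma rsum_ext {T : Type} (l : list T) g1 g2 : (forall x, g1 x = g2 x) -> rsum l g1 = rsum l g2.
Proof. intros H. unfold rsum. f_equal. apply map_ext. auto. Qed.

Lemma NE_map f A H Kt S Pf : NE (map f A) H Kt S Pf =
  NE A (fun y => H (f y)) (fun y => Kt (f y)) (fun y => S (f y)) (fun y => Pf (f y)).
Proof.
  unfold NE. rewrite !map_map. apply rsum_ext. intros eta. apply rsum_ext. intros k.
  rewrite !rsum_map. auto.
Qed.

Lemma ceqb_inj {T U : Type} (F : T -> U) a b : (forall a b, F a = F b -> a = b) -> ceqb (F a) (F b) = ceqb a b.
Proof.
  intros Hi. unfold ceqb. destruct (excluded_middle_informative (F a = F b)), (excluded_middle_informative (a = b));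
  auto; exfalso; [apply n; auto | apply n; subst; auto].
Qed.

Lemma cdedup_map_inj {T U : Type} (F : T -> U) l : (forall a b, F a = F b -> a = b) ->
  cdedup (map F l) = map F (cdedup l).
Proof.
  intros Hi. induction l as [|a l IH]; simpl; auto.
  assert (E : existsb (ceqb (F a)) (map F l) = existsb (ceqb a) l).
  { clear IH. induction l as [|b l IHl]; simpl; auto. rewrite IHl, ceqb_inj; auto. }
  rewrite E. destruct (existsb (ceqb a) l); simpl; rewrite IH; auto.
Qed.

Lemma NE_inj (F : list (nat -> option bool) -> list (nat -> option bool)) A H Kt S Pf :
  (forall a b, F a = F b -> a = b) ->
  NE A (fun y => F (H y)) Kt S Pf = NE A H Kt S Pf.
Proof.
  intros Hi. unfold NE. rewrite <- (map_map H F). rewrite cdedup_map_inj by auto. rewrite rsum_map.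
  apply rsum_ext. intros eta. cbv beta. apply rsum_ext. intros k. cbv zeta. f_equal; f_equal; apply rsum_ext; intros y; rewrite (ceqb_inj F) by auto; auto.
Qed.

Lemma fupd_comp s y a b : (forall u v, s u = s v -> u = v) ->
  (fun j => fupd y (s a) b (s j)) = fupd (fun j => y (s j)) a b.
Proof.
  intros Hi. extensionality j. unfold fupd. destruct (Nat.eqb_spec (s j) (s a)), (Nat.eqb_spec j a); auto.
  - apply Hi in e. contradiction.
  - subst. contradiction.
Qed.

Lemma assigns_rn s l : (forall u v, s u = s v -> u = v) ->
  map (fun y j => y (s j)) (assigns (map s l)) = assigns l.
Proof.
  intros Hi. induction l as [|a l IH]; simpl; auto.
  rewrite <- IH. clear IH. induction (assigns (map s l)) as [|y L IHL]; simpl; auto.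
  rewrite !fupd_comp by auto. rewrite IHL. auto.
Qed.

Lemma eval_map_rn s m e : eval_map (rename_map s m) e = eval_map m (rename_env s e).
Proof. extensionality a. unfold eval_map, rename_map. destruct (m a); auto. Qed.

Lemma norm2_rename s s' ha x : bij s s' -> hps_norm2 (rename s ha) x = hps_norm2 ha x.
Proof.
  intros Hb. assert (Hi : forall u v, s u = s v -> u = v) by (intros; eapply bij_inj; eauto).
  rewrite !norm2_NE. rewrite <- (assigns_rn s (hsu ha)) by auto. rewrite NE_map.
  unfold hist_at, ket_at. simpl. f_equal.
  - extensionality y. rewrite map_map. apply map_ext. intros m. apply eval_map_rn.
  - extensionality y. apply eval_map_rn.
Qed.

Lemma app_inj_len {T : Type} (l1 l2 r1 r2 : list T) : length l1 = length l2 -> l1 ++ r1 = l2 ++ r2 -> l1 = l2.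
Proof.
  revert l2. induction l1 as [|a l1 IH]; intros [|b l2] H E; simpl in *; try lia; auto.
  injection E as <- E. f_equal. apply (IH l2); auto.
Qed.

Lemma eval_last (sa : list amap) e : eval_map (last sa emptymap) e = last (map (fun m => eval_map m e) sa) (fun _ => None).
Proof.
  destruct sa as [|m l] using rev_ind; [extensionality a; reflexivity|].
  rewrite map_app. simpl. rewrite !last_last. auto.
Qed.

Lemma norm2_pad ha n x : hps_norm2 (padha ha n) x = hps_norm2 ha x.
Proof.
  rewrite !norm2_NE. simpl.
  set (k := (n - length (hcl ha))%nat).
  set (F := fun l : list (nat -> option bool) => l ++ repeat (last l (fun _ => None)) k).
  assert (E : (fun y => hist_at (padha ha n) (Env x y)) = (fun y => F (hist_at ha (Env x y)))).
  { extensionality y. unfold hist_at, F, padha, pad. simpl. rewrite map_app, map_repeat. f_equal. f_equal.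
    apply eval_last. }
  simpl in E. rewrite E. apply NE_inj.
  intros a b Hab. unfold F in Hab. apply app_inj_len in Hab; auto.
  apply (f_equal (@length _)) in Hab. rewrite !length_app, !repeat_length in Hab. lia.
Qed.

Lemma norm_rename s s' ha x : bij s s' -> hps_norm (rename s ha) x = hps_norm ha x.
Proof. intros. unfold hps_norm. rewrite (norm2_rename s s'); auto. Qed.

Lemma norm_pad ha n x : hps_norm (padha ha n) x = hps_norm ha x.
Proof. unfold hps_norm. rewrite norm2_pad. auto. Qed.

Lemma dep_rn {T : Type} (Xp : nat -> Prop) (l : list nat) s (p : env -> T) :
  dep_only Xp (fun j => In j l) p -> dep_only Xp (fun j => In j (map s l)) (fun e => p (rename_env s e)).
Proof.
  intros H e1 e2 H1 H2. apply H; simpl; auto. intros j Hj. apply H2. apply in_map. auto.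
Qed.

Lemma rename_map_some s m c p : rename_map s m c = Some p -> exists p0, m c = Some p0 /\ p = fun e => p0 (rename_env s e).
Proof. unfold rename_map. destruct (m c); intros E; inversion E; eauto. Qed.

Lemma rename_map_none s m c : rename_map s m c = None <-> m c = None.
Proof. unfold rename_map. destruct (m c); split; intros; congruence. Qed.

Lemma finite_rn s m : finite_dom m -> finite_dom (rename_map s m).
Proof.
  intros (l & H). exists l. intros a Ha. apply H. intros E. apply Ha. apply rename_map_none. auto.
Qed.

Lemma wf_rename s s' ha : bij s s' -> wf_hps ha -> wf_hps (rename s ha).
Proof.
  intros Hb (N & Fq & Fc & I & H1 & H2 & H3 & H4 & H5). repeat split; simpl.
  - apply Injective_map_NoDup; auto. intros x y E. eapply bij_inj; eauto.
  - apply finite_rn; auto.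
  - apply Forall_map. eapply Forall_impl; [|exact Fc]. intros. apply finite_rn; auto.
  - exists I. repeat split.
    + intros q p E. apply rename_map_some in E. destruct E as (p0 & E & ->). apply dep_rn. eapply H1; eauto.
    + intros m Hm c p E. apply in_map_iff in Hm. destruct Hm as (m0 & <- & Hm0).
      apply rename_map_some in E. destruct E as (p0 & E & ->). apply dep_rn. eapply H2; eauto.
    + apply dep_rn. auto.
    + apply dep_rn. auto.
    + intros e. apply H5.
Qed.

Lemma noinput_rename s ha : no_input ha -> no_input (rename s ha).
Proof.
  intros (H1 & H2 & H3 & H4). repeat split; simpl.
  + intros q p E. apply rename_map_some in E. destruct E as (p0 & E & ->). apply dep_rn. eapply H1; eauto.
  + intros m Hm c p E. apply in_map_iff in Hm. destruct Hm as (m0 & <- & Hm0).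
    apply rename_map_some in E. destruct E as (p0 & E & ->). apply dep_rn. eapply H2; eauto.
  + apply dep_rn. auto.
  + apply dep_rn. auto.
Qed.

Lemma In_pad m l n : In m (pad l n) -> In m l \/ m = emptymap.
Proof.
  unfold pad. rewrite in_app_iff. intros [H|H]; auto. apply repeat_spec in H. subst.
  destruct l as [|a l] using rev_ind; auto. rewrite last_last. left. apply in_app_iff. simpl. auto.
Qed.

Lemma wf_pad ha n : wf_hps ha -> wf_hps (padha ha n).
Proof.
  intros (N & Fq & Fc & I & H1 & H2 & H3 & H4 & H5). repeat split; simpl; auto.
  - apply Forall_forall. intros m Hm. apply In_pad in Hm. destruct Hm as [Hm|Hm].
    + rewrite Forall_forall in Fc. auto.
    + subst. exists []. intros a Ha. apply Ha. reflexivity.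
  - exists I. repeat split; auto.
    intros m Hm c p E. apply In_pad in Hm. destruct Hm as [Hm|Hm]; [eapply H2; eauto|]. subst. discriminate.
Qed.

Lemma noinput_pad ha n : no_input ha -> no_input (padha ha n).
Proof.
  intros (H1 & H2 & H3 & H4). repeat split; simpl; auto.
  intros m Hm c p E. apply In_pad in Hm. destruct Hm as [Hm|Hm]; [eapply H2; eauto|]. subst. discriminate.
Qed.

Lemma nth_map_rn s (l : list amap) t : nth t (map (rename_map s) l) emptymap = rename_map s (nth t l emptymap).
Proof.
  revert t. induction l as [|a l IH]; intros t; destruct t; simpl; auto.
Qed.

Lemma tok_rename X ha s : tok X ha -> tok X (rename s ha).
Proof.
  intros (T1 & T2 & T3). repeat split; simpl.
  - intros q H. apply rename_map_none. auto.
  - rewrite length_map. auto.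
  - intros t c H. rewrite nth_map_rn. apply rename_map_none. auto.
Qed.

Lemma tensor_tok X ha : tensor_ok X ha -> tok X ha.
Proof. intros (_ & H). exact H. Qed.

Lemma UO X ha : tok X ha -> forall P, uses_only X P -> rf ha P.
Proof.
  intros T. assert (Hb : forall b, bexp_in X b -> brf ha b).
  { induction b; simpl; intuition.
    - eapply tok_top; eauto.
    - destruct T as (T1&_). auto. }
  destruct T as (T1&T2&T3).
  induction P; simpl; intuition; eapply tok_top; eauto; split; auto.
Qed.

Lemma rename_map_none_neg s m c : m c <> None -> rename_map s m c <> None.
Proof. intros H E. apply rename_map_none in E. auto. Qed.

Lemma id_bij : bij (fun j => j) (fun j => j).
Proof. split; auto. Qed.

Lemma comp_bij r r' s s' : bij r r' -> bij s s' -> bij (fun j => r (s j)) (fun j => s' (r' j)).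
Proof. intros [A1 A2] [B1 B2]. split; intros j; rewrite ?A1, ?B1, ?A2, ?B2; auto. Qed.

Lemma shift_big (K : nat) (l : list nat) (j : nat) : (forall x : nat, In x l -> (x < K)%nat) -> In j (map (shiftK K l) l) -> (K <= j)%nat.
Proof.
  intros HK H. apply in_map_iff in H. destruct H as (x & <- & Hx). rewrite shift_in; auto. lia.
Qed.

Lemma part2 h h' P : wf_hps h' -> hps_impl h h' -> uses_only h' P -> hps_impl (sem P h) (sem P h').
Proof.
  intros W' (ha & Wa & Na & Nm & Tok & rho & rho' & Hba & Hbb & He) Huse.
  assert (Hb : bij rho rho') by (split; auto).
  assert (H0 : RT h h' ha rho) by (apply RT_heq; apply hps_eq_heq; auto).
  set (K := S (maxl (hsu ha ++ hsu h' ++ hsu (sem P h')))).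
  assert (HK : forall j, In j (hsu ha) -> (j < K)%nat).
  { intros j Hj. unfold K. assert (j <= maxl (hsu ha ++ hsu h' ++ hsu (sem P h')))%nat; [|lia].
    apply in_le_maxl. apply in_app_iff; auto. }
  assert (HKX : forall j, In j (hsu h') -> (j < K)%nat).
  { intros j Hj. unfold K. assert (j <= maxl (hsu ha ++ hsu h' ++ hsu (sem P h')))%nat; [|lia].
    apply in_le_maxl. rewrite !in_app_iff; auto. }
  assert (HKS : forall j, In j (hsu (sem P h')) -> (j < K)%nat).
  { intros j Hj. unfold K. assert (j <= maxl (hsu ha ++ hsu h' ++ hsu (sem P h')))%nat; [|lia].
    apply in_le_maxl. rewrite !in_app_iff; auto. }
  assert (Hd : forall j, In j (hsu h') -> ~ In j (hsu ha)) by (apply Tok).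
  set (s := shiftK K (hsu ha)).
  assert (Hbs : bij s s) by (split; intros; apply shift_invol; auto).
  assert (H1 := Shift h h' ha rho K (wf_sdep h' W') Hd HK HKX H0). fold s in H1.
  set (ha1 := rename s ha) in *.
  assert (Hb1 := comp_bij _ _ _ _ Hb Hbs).
  assert (Hfar : forall j, In j (hsu ha1) -> (K <= j)%nat) by (intros j Hj; apply (shift_big K (hsu ha)); [exact HK|exact Hj]).
  set (mX := maxl (hsu h')). set (mY := maxl (hsu h)).
  set (g := fun j => if in_dec Nat.eq_dec j (hsu h' ++ hsu ha1) then rho (s j) else (j - mX + mY)%nat).
  assert (Hin : forall j, In j (hsu h' ++ hsu ha1) -> (rho (s j) <= mY)%nat).
  { intros j Hj. apply in_le_maxl. apply (proj1 H1). apply in_map_iff. eauto. }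
  assert (Hout : forall j, In j (hsu (sem P h')) -> ~ In j (hsu h') -> (mX < j)%nat).
  { intros j Hj Hn. apply sem_su in Hj. destruct Hj as [Hj|Hj]; [contradiction|]. unfold mX. lia. }
  destruct (ext_bij g (hsu (sem P h') ++ hsu ha1) [] _ _ id_bij) as (r2 & r2' & Hb2 & Hag).
  { intros j []. }
  { simpl. intros a b Ha Hb' E. unfold g in E.
    destruct (in_dec Nat.eq_dec a (hsu h' ++ hsu ha1)) as [Ia|Ia];
    destruct (in_dec Nat.eq_dec b (hsu h' ++ hsu ha1)) as [Ib|Ib].
    - eapply bij_inj; eauto.
    - exfalso. assert (Hb'' : In b (hsu (sem P h'))).
      { apply in_app_iff in Hb'. destruct Hb'; auto. exfalso. apply Ib. apply in_app_iff; auto. }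
      assert (mX < b)%nat by (apply Hout; auto; intros Hx; apply Ib; apply in_app_iff; auto).
      apply Hin in Ia. lia.
    - exfalso. assert (Ha'' : In a (hsu (sem P h'))).
      { apply in_app_iff in Ha. destruct Ha; auto. exfalso. apply Ia. apply in_app_iff; auto. }
      assert (mX < a)%nat by (apply Hout; auto; intros Hx; apply Ia; apply in_app_iff; auto).
      apply Hin in Ib. lia.
    - assert (Ha'' : In a (hsu (sem P h'))).
      { apply in_app_iff in Ha. destruct Ha; auto. exfalso. apply Ia. apply in_app_iff; auto. }
      assert (Hb'' : In b (hsu (sem P h'))).
      { apply in_app_iff in Hb'. destruct Hb'; auto. exfalso. apply Ib. apply in_app_iff; auto. }
      assert (mX < a)%nat by (apply Hout; auto; intros Hx; apply Ia; apply in_app_iff; auto).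
      assert (mX < b)%nat by (apply Hout; auto; intros Hx; apply Ib; apply in_app_iff; auto).
      lia. }
  simpl in Hag.
  assert (Wa1 : wf_hps ha1) by (apply (wf_rename s s); auto).
  assert (H2 : RT h h' ha1 r2).
  { apply (RT_ext _ _ _ (fun j => rho (s j))); auto using wf_sdep.
    intros j Hj. rewrite Hag.
    - unfold g. destruct (in_dec Nat.eq_dec j (hsu h' ++ hsu ha1)); [auto|contradiction].
    - apply in_app_iff in Hj. apply in_app_iff. destruct Hj; [left; apply sem_su; auto|right; auto]. }
  assert (Tok1 : tok h' ha1) by (apply tok_rename, tensor_tok; auto).
  assert (R1 : rf ha1 P) by (eapply UO; eauto).
  assert (D : forall j, In j (hsu ha1) -> In j (hsu (sem P h')) -> In j (hsu h')).
  { intros j Hj1 Hj2. apply Hfar in Hj1. apply HKS in Hj2. lia. }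
  assert (Nw : newrel r2 h' h (sem P h')).
  { intros j Hj Hn. rewrite Hag by (apply in_app_iff; auto). unfold g.
    destruct (in_dec Nat.eq_dec j (hsu h' ++ hsu ha1)) as [Ij|Ij]; auto.
    exfalso. apply in_app_iff in Ij. destruct Ij as [Ij|Ij]; [contradiction|].
    apply Hfar in Ij. apply HKS in Hj. lia. }
  assert (HG := G P h h' ha1 r2 r2' Hb2 Tok1 R1 D Nw H2).
  exists (padha ha1 (length (hcl (sem P h')))).
  split; [apply wf_pad; auto|].
  split; [apply noinput_pad, noinput_rename; auto|].
  split; [intros x; rewrite norm_pad; unfold ha1; rewrite (norm_rename s s); auto|].
  split.
  - split; [|apply tok_sem; auto].
    intros j Hj Hj'. simpl in Hj'. apply Hfar in Hj'. apply HKS in Hj. lia.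
  - exists r2, r2'. split; [apply Hb2|]. split; [apply Hb2|]. apply heq_hps_eq. apply RT_heq. auto.
Qed.

Lemma munion_some_or (A B : amap) a : munion A B a <> None -> A a <> None \/ B a <> None.
Proof. unfold munion. destruct (A a); [left; discriminate|]. auto. Qed.

Lemma munion_assoc (A B C : amap) : munion A (munion B C) = munion (munion A B) C.
Proof. extensionality a. unfold munion. destruct (A a); auto. Qed.

Lemma MU3 (A B C : amap) : (forall a, munion A C a <> None -> B a = None) ->
  munion (munion A C) B = munion (munion A B) C.
Proof.
  intros H. extensionality a. specialize (H a). unfold munion in *. destruct (A a); auto.
  destruct (C a) eqn:EC; destruct (B a) eqn:EB; auto. exfalso. assert (Some b0 = None) by (apply H; discriminate). discriminate.
Qed.

Lemma pdep_id {T : Type} l (p : env -> T) r : pdep l p -> (forall j, In j l -> r j = j) ->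
  forall e, p (rename_env r e) = p e.
Proof. intros H Hr e. apply H; simpl; auto. Qed.

Lemma rn_id_map r (B : amap) l : (forall c p, B c = Some p -> pdep l p) -> (forall j, In j l -> r j = j) ->
  rename_map r B = B.
Proof.
  intros H Hr. extensionality a. unfold rename_map. destruct (B a) eqn:E; auto.
  f_equal. extensionality e. eapply pdep_id; eauto.
Qed.

Lemma tok_tensor X Z ha : tok X ha -> tok Z ha -> length (hcl X) = length (hcl Z) -> tok (tensor X Z) ha.
Proof.
  intros (A1&A2&A3) (B1&B2&B3) L. repeat split; simpl.
  - intros q H. apply munion_some_or in H. destruct H; auto.
  - rewrite length_map, length_combine. lia.
  - intros t c H. destruct (Nat.lt_ge_cases t (length (hcl X))).
    + rewrite nth_mapcomb in H by lia. apply munion_some_or in H. destruct H; auto.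
    + rewrite nth_over in H; [contradiction|]. rewrite length_map, length_combine. lia.
Qed.

Lemma map_id_in (r : nat -> nat) (l : list nat) : (forall j, In j l -> r j = j) -> map r l = l.
Proof. intros H. transitivity (map (fun j : nat => j) l); [apply map_ext_in; auto|apply map_id]. Qed.

Lemma part1 h h' h'' : wf_hps h' -> wf_hps h'' -> hps_impl h h' -> tensor_ok h h'' -> tensor_ok h' h'' ->
  hps_impl (tensor h h'') (tensor h' h'') /\ hps_impl (tensor h'' h) (tensor h'' h').
Proof.
  intros W' W'' (ha & Wa & Na & Nm & Tok & rho & rho' & Hba & Hbb & He) T1 T2.
  assert (Hb : bij rho rho') by (split; auto).
  assert (H0 : RT h h' ha rho) by (apply RT_heq; apply hps_eq_heq; auto).
  set (K := S (maxl (hsu ha ++ hsu h' ++ hsu h''))).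
  assert (HK : forall j, In j (hsu ha) -> (j < K)%nat).
  { intros j Hj. unfold K. assert (j <= maxl (hsu ha ++ hsu h' ++ hsu h''))%nat; [|lia].
    apply in_le_maxl. apply in_app_iff; auto. }
  assert (HKX : forall j, In j (hsu h') -> (j < K)%nat).
  { intros j Hj. unfold K. assert (j <= maxl (hsu ha ++ hsu h' ++ hsu h''))%nat; [|lia].
    apply in_le_maxl. rewrite !in_app_iff; auto. }
  assert (HKS : forall j, In j (hsu h'') -> (j < K)%nat).
  { intros j Hj. unfold K. assert (j <= maxl (hsu ha ++ hsu h' ++ hsu h''))%nat; [|lia].
    apply in_le_maxl. rewrite !in_app_iff; auto. }
  assert (Hd : forall j, In j (hsu h') -> ~ In j (hsu ha)) by (apply Tok).
  set (s := shiftK K (hsu ha)).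
  assert (Hbs : bij s s) by (split; intros; apply shift_invol; auto).
  assert (H1 := Shift h h' ha rho K (wf_sdep h' W') Hd HK HKX H0). fold s in H1.
  set (ha1 := rename s ha) in *.
  assert (Hb1 := comp_bij _ _ _ _ Hb Hbs).
  assert (Hfar : forall j, In j (hsu ha1) -> (K <= j)%nat) by (intros j Hj; apply (shift_big K (hsu ha)); [exact HK|exact Hj]).
  set (g := fun j => if in_dec Nat.eq_dec j (hsu h'') then j else rho (s j)).
  assert (Hin : forall j, In j (hsu h' ++ hsu ha1) -> In (rho (s j)) (hsu h)).
  { intros j Hj. apply (proj1 H1). apply in_map_iff. eauto. }
  destruct T1 as (T1a & T1b & T1c & T1d). destruct T2 as (T2a & T2b & T2c & T2d).
  destruct (ext_bij g (hsu h' ++ hsu ha1 ++ hsu h'') [] _ _ id_bij) as (r3 & r3' & Hb3 & Hag).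
  { intros j []. }
  { simpl. intros a b Ha Hb' E. unfold g in E.
    assert (Ca : forall x, In x (hsu h' ++ hsu ha1 ++ hsu h'') -> ~ In x (hsu h'') -> In x (hsu h' ++ hsu ha1)).
    { intros x Hx Hn. rewrite !in_app_iff in *. intuition. }
    destruct (in_dec Nat.eq_dec a (hsu h'')) as [Ia|Ia];
    destruct (in_dec Nat.eq_dec b (hsu h'')) as [Ib|Ib]; auto.
    - exfalso. subst a. apply (T1a (rho (s b))); auto.
    - exfalso. subst b. apply (T1a (rho (s a))); auto.
    - eapply bij_inj; eauto. }
  simpl in Hag.
  assert (Wa1 : wf_hps ha1) by (apply (wf_rename s s); auto).
  assert (Hnot : forall j, In j (hsu h' ++ hsu ha1) -> ~ In j (hsu h'')).
  { intros j Hj Hj''. apply in_app_iff in Hj. destruct Hj as [Hj|Hj].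
    - apply (T2a j); auto.
    - apply Hfar in Hj. apply HKS in Hj''. lia. }
  assert (H2 : RT h h' ha1 r3).
  { apply (RT_ext _ _ _ (fun j => rho (s j))); auto using wf_sdep.
    intros j Hj. rewrite Hag.
    - unfold g. destruct (in_dec Nat.eq_dec j (hsu h'')); [|auto]. exfalso. eapply Hnot; eauto.
    - rewrite in_app_iff in *. destruct Hj; auto. right. apply in_app_iff. auto. }
  assert (Hid : forall j, In j (hsu h'') -> r3 j = j).
  { intros j Hj. rewrite Hag by (rewrite !in_app_iff; auto). unfold g.
    destruct (in_dec Nat.eq_dec j (hsu h'')); [auto|contradiction]. }
  destruct (wf_sdep h'' W'') as (Z1&Z2&Z3&Z4).
  destruct H2 as (Hsu&Hq&Hc&HP&Hs).
  assert (Tok1 : tok h' ha1) by (apply tok_rename, tensor_tok; auto).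
  assert (Lh : length (hcl h) = length (hcl h')).
  { rewrite Hc. apply length_stk. apply Tok1. }
  assert (Tok2 : tok h'' ha1).
  { repeat split.
    - intros q Hq''. destruct (hqu ha1 q) eqn:E; auto. exfalso.
      assert (hqu h q <> None).
      { rewrite Hq. apply rename_map_none_neg. unfold munion. destruct (hqu h' q); congruence. }
      apply T1b in H. contradiction.
    - rewrite <- T1c, Lh. apply Tok1.
    - intros t c Hc''. destruct (nth t (hcl ha1) emptymap c) eqn:E; auto. exfalso.
      assert (nth t (hcl h) emptymap c <> None).
      { rewrite Hc, nth_stk by apply Tok1. apply rename_map_none_neg. unfold munion.
        destruct (nth t (hcl h') emptymap c); congruence. }
      apply T1d in H. contradiction. }
  assert (Ln : length (hcl h') = length (hcl h'')) by (rewrite <- Lh; auto).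
  assert (Hq'' : rename_map r3 (hqu h'') = hqu h'') by (eapply rn_id_map; eauto).
  assert (Hstk : forall t, rename_map r3 (nth t (hcl h'') emptymap) = nth t (hcl h'') emptymap).
  { intros t. destruct (Nat.lt_ge_cases t (length (hcl h''))).
    - eapply rn_id_map; eauto. intros c p E. eapply Z2; eauto. apply nth_In. auto.
    - rewrite nth_over by auto. reflexivity. }
  assert (Nm1 : forall x, hps_norm ha1 x = 1).
  { intros x. unfold ha1. rewrite (norm_rename s s); auto. }
  assert (Ni1 : no_input ha1) by (apply noinput_rename; auto).
  assert (Hsupp : forall j, In j (hsu h'') -> ~ In j (hsu ha1)).
  { intros j Hj Hj'. apply Hfar in Hj'. apply HKS in Hj. lia. }
  assert (Hsupp' : forall j, In j (hsu h') -> ~ In j (hsu ha1)).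
  { intros j Hj Hj'. apply Hfar in Hj'. apply HKX in Hj. lia. }
  clearbody ha1.
  assert (HS : forall j, In j (hsu h) <-> In j (map r3 (hsu h')) \/ In j (map r3 (hsu ha1))).
  { intros j. rewrite Hsu, map_app, in_app_iff. tauto. }
  split.
  - exists ha1. split; [auto|]. split; [auto|]. split; [auto|]. split.
    + split; [|apply tok_tensor; auto].
      intros j Hj. simpl in Hj. apply in_app_iff in Hj. destruct Hj; auto.
    + exists r3, r3'. split; [apply Hb3|]. split; [apply Hb3|]. apply heq_hps_eq. apply RT_heq.
      repeat split.
      * intros Hj. simpl in Hj. simpl.
        rewrite !map_app, (map_id_in r3 (hsu h'')) by auto. rewrite !in_app_iff in *.
        destruct Hj as [Hj|Hj]; [apply HS in Hj|]; tauto.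
      * intros Hj. simpl in Hj. simpl.
        rewrite !map_app, (map_id_in r3 (hsu h'')) in Hj by auto. rewrite !in_app_iff in *.
        rewrite HS. tauto.
      * simpl. rewrite Hq, !munion_rn, Hq''. apply MU3. intros a Ha.
        apply T1b. rewrite Hq, munion_rn. auto.
      * simpl. unfold stk. apply nth_ext with (d := emptymap) (d' := emptymap).
        -- rewrite !length_map, !length_combine, !length_map, length_combine. destruct Tok1 as (_&L1&_). lia.
        -- intros t Ht. rewrite length_map, length_combine in Ht.
           rewrite nth_mapcomb by lia. fold (stk r3 (map (fun mm : amap * amap => munion (fst mm) (snd mm))
             (combine (hcl h') (hcl h''))) (hcl ha1)).
           rewrite nth_stk by (rewrite length_map, length_combine; destruct Tok1 as (_&L1&_); lia).
           rewrite nth_mapcomb by lia. rewrite Hc, nth_stk by apply Tok1.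
           rewrite !munion_rn, Hstk. apply MU3. intros a Ha. apply T1d.
           rewrite Hc, nth_stk, munion_rn by apply Tok1. auto.
      * simpl. rewrite HP. extensionality e. rewrite (pdep_id (hsu h'') (hP h'') r3 Z3 Hid). ring.
      * simpl. rewrite Hs. extensionality e. rewrite (pdep_id (hsu h'') (hs h'') r3 Z4 Hid). ring.
  - exists ha1. split; [auto|]. split; [auto|]. split; [auto|]. split.
    + split; [|apply tok_tensor; auto].
      intros j Hj. simpl in Hj. apply in_app_iff in Hj. destruct Hj; auto.
    + exists r3, r3'. split; [apply Hb3|]. split; [apply Hb3|]. apply heq_hps_eq. apply RT_heq.
      repeat split.
      * intros Hj. simpl in Hj. simpl.
        rewrite !map_app, (map_id_in r3 (hsu h'')) by auto. rewrite !in_app_iff in *.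
        destruct Hj as [Hj|Hj]; [|apply HS in Hj]; tauto.
      * intros Hj. simpl in Hj. simpl.
        rewrite !map_app, (map_id_in r3 (hsu h'')) in Hj by auto. rewrite !in_app_iff in *.
        rewrite HS. tauto.
      * simpl. rewrite Hq, !munion_rn, Hq''. apply munion_assoc.
      * simpl. unfold stk. apply nth_ext with (d := emptymap) (d' := emptymap).
        -- rewrite !length_map, !length_combine, !length_map, length_combine. destruct Tok1 as (_&L1&_). lia.
        -- intros t Ht. rewrite length_map, length_combine in Ht.
           rewrite nth_mapcomb by lia. fold (stk r3 (map (fun mm : amap * amap => munion (fst mm) (snd mm))
             (combine (hcl h'') (hcl h'))) (hcl ha1)).
           rewrite nth_stk by (rewrite length_map, length_combine; destruct Tok1 as (_&L1&_); lia).
           rewrite nth_mapcomb by lia. rewrite Hc, nth_stk by apply Tok1.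
           rewrite !munion_rn, Hstk. apply munion_assoc.
      * simpl. rewrite HP. extensionality e. rewrite (pdep_id (hsu h'') (hP h'') r3 Z3 Hid). ring.
      * simpl. rewrite Hs. extensionality e. rewrite (pdep_id (hsu h'') (hs h'') r3 Z4 Hid). ring.
Qed.


Theorem mainTheorem7 (h h' h'' : HPS) (P : prog) :
  wf_hps h -> wf_hps h' -> wf_hps h'' ->
  hps_impl h h' ->
  valid_prog P -> uses_only h' P ->
  tensor_ok h h'' ->
  ((tensor_ok h' h'' ->
      hps_impl (tensor h h'') (tensor h' h'') /\
      hps_impl (tensor h'' h) (tensor h'' h'))
   /\ hps_impl (sem P h) (sem P h')).
Proof.
  intros W W' W'' I V U T. split.
  - intros T2. apply part1; auto.
  - apply part2; auto.
Qed.
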